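(* For every term $t$ of the pair pattern calculus and all integers $b,e,m,s\ge 0$, the following are equivalent: (i) there is a tight derivation $\Phi\triangleright\Gamma\vdash^{(b,e,m,s)}t:\mathtt{t}$ in system $\mathscr{E}$ for some context $\Gamma$ and tight type $\mathtt{t}$; (ii) there exists a canonical form $u\in\mathcal{M}$ such that $t\to_h^{(b,e,m)}u$ (a head-reduction sequence with exactly $b$ steps of kind (b), $e$ of kind (e) and $m$ of kind (m)) and $|u|=s$.
   Context: Pair pattern calculus: patterns $p,q ::= x\mid\langle p,q\rangle$ (linear); $\mathrm{var}(p)$ = variables of $p$; $p\# q$ means disjoint variables. Terms $t,u ::= x\mid\lambda p.t\mid\langle t,u\rangle\mid t\,u\mid t[p/u]$, $\mathrm{var}(p)$ bound in $t$ in $\lambda p.t$ and $t[p/u]$; $\mathrm{fv}$ as usual; terms modulo $\alpha$. List contexts $L::=\Box\mid L[p/u]$, $L\langle t\rangle$ plugging (possibly capturing), $\mathrm{bv}(L)$ variables bound by $L$; $t\{x/u\}$ capture-avoiding substitution; $\mathrm{abs}(t)$ iff $t=L\langle\lambda p.u\rangle$. Head reduction ($t\not\to_h$: no $u$ with $t\to_h u$): (b) $L\langle\lambda p.t\rangle u\to_h L\langle t[p/u]\rangle$ if $\mathrm{bv}(L)\cap\mathrm{fv}(u)=\emptyset$; (m) $t[\langle p_1,p_2\rangle/L\langle\langle u_1,u_2\rangle\rangle]\to_h L\langle t[p_1/u_1][p_2/u_2]\rangle$ if $t\not\to_h$ and $\mathrm{bv}(L)\cap\mathrm{fv}(t)=\emptyset$;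 (e) $t[x/u]\to_h t\{x/u\}$ if $t\not\to_h$; closure: $\lambda p.t\to_h\lambda p.t'$ if $t\to_h t'$; $tu\to_h t'u$ if $t\to_h t'$ and not $\mathrm{abs}(t)$; $t[p/u]\to_h t'[p/u]$ if $t\to_h t'$; $t[p/u]\to_h t[p/u']$ if $t\not\to_h$, $p$ not a variable, $u\to_h u'$. The kind of a step is the base rule (b), (e) or (m) it uses. Canonical forms $\mathcal{M} ::= \lambda p.\mathcal{M}\mid\langle t,t\rangle\mid\mathcal{M}[\langle p_1,p_2\rangle/\mathcal{N}]\mid\mathcal{N}$, $\mathcal{N} ::= x\mid\mathcal{N}\,t\mid\mathcal{N}[\langle p_1,p_2\rangle/\mathcal{N}]$, with size $|x|=0$, $|\langle t,u\rangle|=1$, $|\mathcal{N}t|=|\mathcal{N}|+1$, $|\lambda p.\mathcal{M}|=|\mathcal{M}|+1$, $|\mathcal{M}[\langle p_1,p_2\rangle/\mathcal{N}]|=|\mathcal{M}|+|\mathcal{N}|+1$. System $\mathscr{E}$. Types: tight types $\mathtt{t} ::= \bullet_{\mathcal{N}}\mid\bullet_{\mathcal{M}}$; types $\sigma ::= \mathtt{t}\mid \mathcal{A}_1\times\mathcal{A}_2\mid \mathcal{A}\to\sigma$; multi-types $\mathcal{A} ::= [\sigma_k]_{k\in K}$ (finite, possibly empty). Contexts map variables to multi-types, $\mathrm{dom}(\Gamma)$ = variables with non-empty multi-type; $\wedge$ pointwise multiset union; $\Gamma|_p$ restriction to $\mathrm{var}(p)$; $\Gamma\setminus\mathrm{var}(p)$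 removal. $\mathrm{tight}(\sigma)$ iff $\sigma\in\{\bullet_{\mathcal{N}},\bullet_{\mathcal{M}}\}$, extended elementwise. Rules: (pat_v) $x:\mathcal{A}\Vdash^{(1,0,0)} x:\mathcal{A}$. (pat_×) from $\Gamma\Vdash^{(e_p,m_p,f_p)}p:\mathcal{A}$, $\Delta\Vdash^{(e_q,m_q,f_q)}q:\mathcal{B}$, $p\#q$ infer $\Gamma\wedge\Delta\Vdash^{(e_p+e_q,1+m_p+m_q,f_p+f_q)}\langle p,q\rangle:[\mathcal{A}\times\mathcal{B}]$. (pat_p) if $\mathrm{dom}(\Gamma)\subseteq\mathrm{var}(\langle p,q\rangle)$ and $\mathrm{tight}(\Gamma)$ then $\Gamma\Vdash^{(0,0,1)}\langle p,q\rangle:[\bullet_{\mathcal{N}}]$. (ax) $x:[\sigma]\vdash^{(0,0,0,0)}x:\sigma$. (abs) from $\Gamma\vdash^{(b,e,m,f)}t:\sigma$ and $\Gamma|_p\Vdash^{(e_p,m_p,f_p)}p:\mathcal{A}$ infer $\Gamma\setminus\mathrm{var}(p)\vdash^{(b+1,e+e_p,m+m_p,f+f_p)}\lambda p.t:\mathcal{A}\to\sigma$. (abs_p) from $\Gamma\vdash^{(b,e,m,f)}t:\mathtt{t}$ ($\mathtt{t}$ tight) and $\mathrm{tight}(\Gamma|_p)$ infer $\Gamma\setminus\mathrm{var}(p)\vdash^{(b,e,m,f+1)}\lambda p.t:\bullet_{\mathcal{M}}$. (many) from $(\Gamma_k\vdash^{(b_k,e_k,m_k,f_k)}t:\sigma_k)_{k\in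 K}$ infer $\wedge_k\Gamma_k\vdash^{(\sum b_k,\sum e_k,\sum m_k,\sum f_k)}t:[\sigma_k]_{k\in K}$. (app) from $\Gamma\vdash^{(b_t,e_t,m_t,f_t)}t:\mathcal{A}\to\sigma$, $\Delta\vdash^{(b_u,e_u,m_u,f_u)}u:\mathcal{A}$ infer $\Gamma\wedge\Delta\vdash^{(b_t+b_u,e_t+e_u,m_t+m_u,f_t+f_u)}t\,u:\sigma$. (app_p) from $\Gamma\vdash^{(b,e,m,f)}t:\bullet_{\mathcal{N}}$ infer $\Gamma\vdash^{(b,e,m,f+1)}t\,u:\bullet_{\mathcal{N}}$. (pair) from $\Gamma\vdash^{(b_t,e_t,m_t,f_t)}t:\mathcal{A}$, $\Delta\vdash^{(b_u,e_u,m_u,f_u)}u:\mathcal{B}$ infer $\Gamma\wedge\Delta\vdash^{(b_t+b_u,e_t+e_u,m_t+m_u,f_t+f_u)}\langle t,u\rangle:\mathcal{A}\times\mathcal{B}$. (pair_p) $\vdash^{(0,0,0,1)}\langle t,u\rangle:\bullet_{\mathcal{M}}$. (match) from $\Gamma\vdash^{(b_t,e_t,m_t,f_t)}t:\sigma$, $\Gamma|_p\Vdash^{(e_p,m_p,f_p)}p:\mathcal{A}$, $\Delta\vdash^{(b_u,e_u,m_u,f_u)}u:\mathcal{A}$ infer $(\Gamma\setminus\mathrm{var}(p))\wedge\Delta\vdash^{(b_t+b_u,e_t+e_u+e_p,m_t+m_u+m_p,f_t+f_u+f_p)}t[p/u]:\sigma$. A derivation is tight if its context and its type are tight. *)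

(* Defs.v *)
From Stdlib Require Import List Permutation Arith.
Import ListNotations.

(* Linear patterns up to renaming: a pattern is its shape; the variables of a
   pattern are its leaves, numbered left to right.  Linearity and disjointness
   p # q are automatic. *)
Inductive pat : Type :=
| PVar : pat
| PPair : pat -> pat -> pat.

Fixpoint psize (p : pat) : nat :=
  match p with
  | PVar => 1
  | PPair p q => psize p + psize q
  end.

(* In [Lam p t] and [Sub t p u] (= t[p/u]) the psize p variables of p are
   bound in t: index i < psize p denotes the i-th leaf of p (left to right);
   indices >= psize p denote outer variables (shifted by psize p). *)
Inductive term : Type :=
| Var  : nat -> term
| Lam  : pat -> term -> term
| Pair : term -> term -> term
| App  : term -> term -> term
| Sub  : term -> pat -> term -> term.

Fixpoint lift (d c : nat) (t : term) : term :=
  match t with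
  | Var n => if Nat.ltb n c then Var n else Var (n + d)
  | Lam p t1 => Lam p (lift d (c + psize p) t1)
  | Pair t1 t2 => Pair (lift d c t1) (lift d c t2)
  | App t1 t2 => App (lift d c t1) (lift d c t2)
  | Sub t1 p t2 => Sub (lift d (c + psize p) t1) p (lift d c t2)
  end.

(* capture-avoiding substitution of u for index k (and decrement of the
   indices above k): subst 0 u t is t{x/u} where x is the binder with index 0 *)
Fixpoint subst (k : nat) (u : term) (t : term) : term :=
  match t with
  | Var n => if Nat.ltb n k then Var n
             else if Nat.eqb n k then lift k 0 u else Var (n - 1)
  | Lam p t1 => Lam p (subst (k + psize p) u t1)
  | Pair t1 t2 => Pair (subst k u t1) (subst k u t2)
  | App t1 t2 => App (subst k u t1) (subst k u t2)
  | Sub t1 p t2 => Sub (subst (k + psize p) u t1) p (subst k u t2)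
  end.

Inductive lctx : Type :=
| Hole : lctx
| LSub : lctx -> pat -> term -> lctx.

(* possibly capturing plugging L<t> *)
Fixpoint plug (L : lctx) (t : term) : term :=
  match L with
  | Hole => t
  | LSub L' p u => Sub (plug L' t) p u
  end.

Fixpoint nbL (L : lctx) : nat :=
  match L with
  | Hole => 0
  | LSub L' p _ => nbL L' + psize p
  end.

Definition is_abs (t : term) : Prop :=
  exists L p u, t = plug L (Lam p u).

Inductive kind : Type := KB | KE | KM.

(* Defined by structural
   recursion on t, so that the negative premises "t does not reduce" (always
   on a strict subterm) are allowed.  The side conditions
   bv(L) # fv(u) / bv(L) # fv(t) of the named presentation become the index
   shifts below. *)
Fixpoint hstep (t : term) : kind -> term -> Prop :=
  match t with
  | Var _ => fun _ _ => False
  | Pair _ _ => fun _ _ => False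
  | Lam p t1 => fun k v =>
      exists t1', hstep t1 k t1' /\ v = Lam p t1'
  | App t1 u => fun k v =>
      (* (b)  L<lambda p.t0> u -> L<t0[p/u]> *)
      (k = KB /\ exists L p t0,
          t1 = plug L (Lam p t0) /\
          v = plug L (Sub t0 p (lift (nbL L) 0 u)))
      \/
      (~ is_abs t1 /\ exists t1', hstep t1 k t1' /\ v = App t1' u)
  | Sub t1 p u => fun k v =>
      (exists t1', hstep t1 k t1' /\ v = Sub t1' p u)
      \/
      ((forall k' w, ~ hstep t1 k' w) /\
       match p with
       | PVar =>
           k = KE /\ v = subst 0 u t1
       | PPair p1 p2 =>
           (* (m)  t[<p1,p2>/L<<u1,u2>>] -> L<t[p1/u1][p2/u2]>  if t does not reduce *)
           (k = KM /\ exists L u1 u2,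
               u = plug L (Pair u1 u2) /\
               v = plug L (Sub (Sub (lift (nbL L) (psize p1 + psize p2) t1)
                                    p1 (lift (psize p2) 0 u1))
                               p2 u2))
           \/
           (exists u', hstep u k u' /\ v = Sub t1 p u')
       end)
  end.

Definition isB (k : kind) : nat := match k with KB => 1 | _ => 0 end.
Definition isE (k : kind) : nat := match k with KE => 1 | _ => 0 end.
Definition isM (k : kind) : nat := match k with KM => 1 | _ => 0 end.

Inductive hreds : term -> nat -> nat -> nat -> term -> Prop :=
| hreds_refl t : hreds t 0 0 0 t
| hreds_step t k t' b e m u :
    hstep t k t' -> hreds t' b e m u ->
    hreds t (isB k + b) (isE k + e) (isM k + m) u.

(** * Canonical forms with their size: canM u s  iff  u in M and |u| = s *)
Inductive canM : term -> nat -> Prop :=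
| canM_lam p t n : canM t n -> canM (Lam p t) (n + 1)
| canM_pair t u : canM (Pair t u) 1
| canM_sub t p1 p2 u n k :
    canM t n -> canN u k -> canM (Sub t (PPair p1 p2) u) (n + k + 1)
| canM_N t n : canN t n -> canM t n
with canN : term -> nat -> Prop :=
| canN_var x : canN (Var x) 0
| canN_app t u n : canN t n -> canN (App t u) (n + 1)
| canN_sub t p1 p2 u n k :
    canN t n -> canN u k -> canN (Sub t (PPair p1 p2) u) (n + k + 1).

(** * Types.  Multi-types are finite multisets, represented by lists;
    type equality is taken up to permutation of multi-types, recursively. *)
Inductive ty : Type :=
| TN : ty
| TM : ty
| TProd : list ty -> list ty -> ty
| TArr : list ty -> ty -> ty.

Definition mty := list ty.

Inductive teq : ty -> ty -> Prop :=
| teq_N : teq TN TN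
| teq_M : teq TM TM
| teq_prod A1 A2 B1 B2 B1' B2' :
    Permutation B1 B1' -> Forall2 teq A1 B1' ->
    Permutation B2 B2' -> Forall2 teq A2 B2' ->
    teq (TProd A1 A2) (TProd B1 B2)
| teq_arr A B B' s s' :
    Permutation B B' -> Forall2 teq A B' -> teq s s' ->
    teq (TArr A s) (TArr B s').

Definition mteq (A B : mty) : Prop :=
  exists B', Permutation B B' /\ Forall2 teq A B'.

Definition tight (s : ty) : Prop := s = TN \/ s = TM.
Definition tight_m (A : mty) : Prop := Forall tight A.

(** Typing contexts: de Bruijn index -> multi-type ([] = not in domain) *)
Definition ctx := nat -> mty.
Definition cempty : ctx := fun _ => [].
Definition csingle (x : nat) (A : mty) : ctx :=
  fun y => if Nat.eqb y x then A else [].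
Definition cand (G D : ctx) : ctx := fun y => G y ++ D y.
(* G \ var(p) where p binds the n lowest indices *)
Definition cdrop (n : nat) (G : ctx) : ctx := fun y => G (y + n).
Definition tight_ctx (G : ctx) : Prop := forall x, tight_m (G x).

(* Pattern typing  G|_p ||-^{(e,m,f)} p : A, where the variables of p are the
   indices k, k+1, ..., k + psize p - 1 of G (the judgement only reads
   these entries, i.e. the restriction G|_p). *)
Inductive ptyp : ctx -> nat -> pat -> mty -> nat -> nat -> nat -> Prop :=
| pt_var G k : ptyp G k PVar (G k) 1 0 0
| pt_pair G k p q A B ep mp fp eq mq fq :
    ptyp G k p A ep mp fp ->
    ptyp G (k + psize p) q B eq mq fq ->
    ptyp G k (PPair p q) [TProd A B] (ep + eq) (1 + mp + mq) (fp + fq)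
| pt_p G k p q :
    (forall i, k <= i < k + psize (PPair p q) -> tight_m (G i)) ->
    ptyp G k (PPair p q) [TN] 0 0 1.

Inductive typ : ctx -> term -> ty -> nat -> nat -> nat -> nat -> Prop :=
| ty_ax x s : typ (csingle x [s]) (Var x) s 0 0 0 0
| ty_abs G p t s A b e m f ep mp fp :
    typ G t s b e m f ->
    ptyp G 0 p A ep mp fp ->
    typ (cdrop (psize p) G) (Lam p t) (TArr A s) (b + 1) (e + ep) (m + mp) (f + fp)
| ty_abs_p G p t s b e m f :
    typ G t s b e m f -> tight s ->
    (forall i, i < psize p -> tight_m (G i)) ->
    typ (cdrop (psize p) G) (Lam p t) TM b e m (f + 1)
| ty_app G D t u A B s bt et mt ft bu eu mu fu :
    typ G t (TArr A s) bt et mt ft ->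
    mtyp D u B bu eu mu fu -> mteq A B ->
    typ (cand G D) (App t u) s (bt + bu) (et + eu) (mt + mu) (ft + fu)
| ty_app_p G t u b e m f :
    typ G t TN b e m f -> typ G (App t u) TN b e m (f + 1)
| ty_pair G D t u A B bt et mt ft bu eu mu fu :
    mtyp G t A bt et mt ft -> mtyp D u B bu eu mu fu ->
    typ (cand G D) (Pair t u) (TProd A B) (bt + bu) (et + eu) (mt + mu) (ft + fu)
| ty_pair_p t u : typ cempty (Pair t u) TM 0 0 0 1
| ty_match G D t p u s A B bt et mt ft ep mp fp bu eu mu fu :
    typ G t s bt et mt ft ->
    ptyp G 0 p A ep mp fp ->
    mtyp D u B bu eu mu fu -> mteq A B ->
    typ (cand (cdrop (psize p) G) D) (Sub t p u) s
        (bt + bu) (et + eu + ep) (mt + mu + mp) (ft + fu + fp)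
with mtyp : ctx -> term -> mty -> nat -> nat -> nat -> nat -> Prop :=
| mt_nil t : mtyp cempty t [] 0 0 0 0
| mt_cons G D t s A b e m f b' e' m' f' :
    typ G t s b e m f -> mtyp D t A b' e' m' f' ->
    mtyp (cand G D) t (s :: A) (b + b') (e + e') (m + m') (f + f').

(* Main.v *)
Require Import Defs.
From Stdlib Require Import List Permutation Arith Lia Classical.
Import ListNotations.

Fixpoint ty_ind' (P : ty -> Prop) (HN : P TN) (HM : P TM)
  (HP : forall A B, Forall P A -> Forall P B -> P (TProd A B))
  (HA : forall A s, Forall P A -> P s -> P (TArr A s)) (t : ty) : P t :=
  let fix lf (l : list ty) : Forall P l :=
    match l with
    | [] => Forall_nil _
    | x :: r => Forall_cons _ (ty_ind' P HN HM HP HA x) (lf r)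
    end in
  match t with
  | TN => HN
  | TM => HM
  | TProd A B => HP A B (lf A) (lf B)
  | TArr A s => HA A s (lf A) (ty_ind' P HN HM HP HA s)
  end.

Definition mteqR (R : ty -> ty -> Prop) (A B : mty) : Prop :=
  exists B', Permutation B B' /\ Forall2 R A B'.

Lemma F2_flip (R : ty -> ty -> Prop) A B :
  Forall (fun a => forall b, R a b -> R b a) A -> Forall2 R A B -> Forall2 R B A.
Proof.
  intros HF H; induction H; constructor; inversion HF; subst; auto.
Qed.

Lemma mteqR_sym R A B :
  Forall (fun a => forall b, R a b -> R b a) A -> mteqR R A B -> mteqR R B A.
Proof.
  intros HF [B' [HP HF2]].
  apply F2_flip in HF2; auto.
  destruct (Permutation_Forall2 (Permutation_sym HP) HF2) as [A' [HA1 HA2]].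
  exists A'; split; auto.
Qed.

Lemma F2_trans (R : ty -> ty -> Prop) A B C :
  Forall (fun a => forall b c, R a b -> R b c -> R a c) A ->
  Forall2 R A B -> Forall2 R B C -> Forall2 R A C.
Proof.
  intros HF H; revert C; induction H; intros C HC; inversion HC; subst; constructor.
  - inversion HF; subst; eauto.
  - inversion HF; subst; eauto.
Qed.

Lemma mteqR_trans R A B C :
  Forall (fun a => forall b c, R a b -> R b c -> R a c) A ->
  mteqR R A B -> mteqR R B C -> mteqR R A C.
Proof.
  intros HF [B1 [P1 F1]] [C1 [P2 F2]].
  destruct (Permutation_Forall2 P1 F2) as [C2 [P3 F3]].
  exists C2; split. eapply Permutation_trans; eauto.
  eapply F2_trans; eauto.
Qed.

Lemma F2_diag (P : ty -> Prop) (R : ty -> ty -> Prop) l :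
  Forall (fun a => R a a) l -> Forall2 R l l.
Proof. induction 1; constructor; auto. Qed.

Lemma teq_refl s : teq s s.
Proof.
  induction s using ty_ind'.
  - constructor.
  - constructor.
  - eapply teq_prod; try apply Permutation_refl; apply F2_diag; auto; exact (fun _ => True).
  - eapply teq_arr; try apply Permutation_refl; auto; apply F2_diag; auto; exact (fun _ => True).
Qed.

Lemma teq_sym s t : teq s t -> teq t s.
Proof.
  revert t; induction s using ty_ind'; intros t Ht; inversion Ht; subst.
  - constructor.
  - constructor.
  - destruct (mteqR_sym teq A B1) as [x [? ?]]; [auto| exists B1'; auto|].
    destruct (mteqR_sym teq B B2) as [y [? ?]]; [auto| exists B2'; auto|].
    econstructor; eauto.
  - destruct (mteqR_sym teq A B) as [x [? ?]]; [auto| exists B'; auto|].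
    econstructor; eauto.
Qed.

Lemma teq_prod_inv0 A B s : teq (TProd A B) s ->
  exists A' B', s = TProd A' B' /\ mteqR teq A A' /\ mteqR teq B B'.
Proof. intro H; inversion H; subst; do 2 eexists; split; [reflexivity|]; split; eexists; eauto. Qed.

Lemma teq_arr_inv0 A t s : teq (TArr A t) s ->
  exists A' t', s = TArr A' t' /\ mteqR teq A A' /\ teq t t'.
Proof. intro H; inversion H; subst; do 2 eexists; split; [reflexivity|]; split; [eexists|]; eauto. Qed.

Lemma teq_trans s t u : teq s t -> teq t u -> teq s u.
Proof.
  revert t u; induction s using ty_ind'; intros t u H1 H2.
  - inversion H1; subst; auto.
  - inversion H1; subst; auto.
  - apply teq_prod_inv0 in H1 as [A1 [B1 [-> [HA HB]]]].
    apply teq_prod_inv0 in H2 as [A2 [B2 [-> [HA2 HB2]]]].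
    assert (X : mteqR teq A A2).
    { eapply mteqR_trans; [|exact HA|exact HA2].
      eapply Forall_impl; [|exact H]. simpl; eauto. }
    assert (Y : mteqR teq B B2).
    { eapply mteqR_trans; [|exact HB|exact HB2].
      eapply Forall_impl; [|exact H0]. simpl; eauto. }
    destruct X as [? [? ?]], Y as [? [? ?]]; econstructor; eauto.
  - apply teq_arr_inv0 in H1 as [A1 [t1 [-> [HA Ht]]]].
    apply teq_arr_inv0 in H2 as [A2 [t2 [-> [HA2 Ht2]]]].
    assert (X : mteqR teq A A2).
    { eapply mteqR_trans; [|exact HA|exact HA2].
      eapply Forall_impl; [|exact H]. simpl; eauto. }
    destruct X as [? [? ?]]; econstructor; eauto.
Qed.

Lemma mteq_refl A : mteq A A.
Proof. exists A; split; [apply Permutation_refl|]. induction A; constructor; auto using teq_refl. Qed.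

Lemma mteq_sym A B : mteq A B -> mteq B A.
Proof.
  intro H. apply (mteqR_sym teq A B); auto.
  apply Forall_forall; intros; apply teq_sym; auto.
Qed.

Lemma mteq_trans A B C : mteq A B -> mteq B C -> mteq A C.
Proof.
  intros. apply (mteqR_trans teq A B C); auto.
  apply Forall_forall; intros; eapply teq_trans; eauto.
Qed.

Lemma mteq_perm A B : Permutation A B -> mteq A B.
Proof.
  intro H. exists A; split; [apply Permutation_sym; auto|].
  apply F2_diag; [exact (fun _ => True)|]. apply Forall_forall; intros; apply teq_refl.
Qed.

Lemma mteq_app A B A' B' : mteq A A' -> mteq B B' -> mteq (A ++ B) (A' ++ B').
Proof.
  intros [x [? ?]] [y [? ?]]; exists (x ++ y); split.
  apply Permutation_app; auto. apply Forall2_app; auto.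
Qed.

Lemma mteq_nil_l B : mteq [] B -> B = [].
Proof. intros [x [P F]]; inversion F; subst; apply Permutation_nil; apply Permutation_sym; auto. Qed.

Lemma mteq_nil_r B : mteq B [] -> B = [].
Proof. intros H; apply mteq_nil_l, mteq_sym; auto. Qed.

Lemma mteq_single_l a B : mteq [a] B -> exists b, B = [b] /\ teq a b.
Proof.
  intros [x [P F]]; inversion F; subst. inversion H3; subst.
  apply Permutation_sym, Permutation_length_1_inv in P. subst; eauto.
Qed.

Lemma mteq_single_r a B : mteq B [a] -> exists b, B = [b] /\ teq b a.
Proof.
  intros H; apply mteq_sym, mteq_single_l in H as [b [-> ?]]; eauto using teq_sym.
Qed.

Lemma mteq_single a b : teq a b -> mteq [a] [b].
Proof. intros; exists [b]; split; auto. Qed.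

Lemma teq_prod_inv A B s : teq (TProd A B) s ->
  exists A' B', s = TProd A' B' /\ mteq A A' /\ mteq B B'.
Proof. intro H; inversion H; subst; do 2 eexists; split; [reflexivity|]; split; eexists; eauto. Qed.

Lemma teq_arr_inv A t s : teq (TArr A t) s ->
  exists A' t', s = TArr A' t' /\ mteq A A' /\ teq t t'.
Proof. intro H; inversion H; subst; do 2 eexists; split; [reflexivity|]; split; [eexists|]; eauto. Qed.

Lemma teq_prod_mk A B A' B' : mteq A A' -> mteq B B' -> teq (TProd A B) (TProd A' B').
Proof. intros [x [? ?]] [y [? ?]]; econstructor; eauto. Qed.

Lemma teq_arr_mk A t A' t' : mteq A A' -> teq t t' -> teq (TArr A t) (TArr A' t').
Proof. intros [x [? ?]] ?; econstructor; eauto. Qed.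

Lemma teq_tight s t : teq s t -> tight s -> tight t.
Proof. intros H [-> | ->]; inversion H; subst; [left|right]; auto. Qed.

Lemma teq_TN s : teq TN s -> s = TN.
Proof. intro H; inversion H; auto. Qed.
Lemma teq_TN_r s : teq s TN -> s = TN.
Proof. intro H; apply teq_sym in H; inversion H; auto. Qed.

Lemma mteq_tight A B : mteq A B -> tight_m A -> tight_m B.
Proof.
  intros [x [P F]] HT. unfold tight_m in *.
  apply (Permutation_Forall (Permutation_sym P)).
  clear P. induction F; constructor; inversion HT; subst.
  eapply teq_tight; eauto. apply IHF; auto.
Qed.

Definition ceq (G G' : ctx) : Prop := forall y, mteq (G y) (G' y).
Definition peq (G G' : ctx) : Prop := forall y, G y = G' y.
Definition cins (c d : nat) (G : ctx) : ctx :=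
  fun y => if Nat.ltb y c then G y else if Nat.ltb y (c + d) then [] else G (y - d).
Definition cremove (k : nat) (G : ctx) : ctx :=
  fun y => if Nat.ltb y k then G y else G (S y).

Ltac dec := repeat match goal with
 | |- context [Nat.ltb ?a ?b] => destruct (Nat.ltb_spec a b)
 | |- context [Nat.eqb ?a ?b] => destruct (Nat.eqb_spec a b)
 end.

Ltac csolve := intro; unfold cins, cremove, csingle, cand, cdrop, cempty; dec;
  simpl; try lia; try reflexivity; try (f_equal; lia).

Lemma ceq_refl G : ceq G G.
Proof. intro; apply mteq_refl. Qed.
Lemma ceq_sym G G' : ceq G G' -> ceq G' G.
Proof. intros H y; apply mteq_sym; auto. Qed.
Lemma ceq_trans G1 G2 G3 : ceq G1 G2 -> ceq G2 G3 -> ceq G1 G3.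
Proof. intros H1 H2 y; eapply mteq_trans; eauto. Qed.
Lemma peq_ceq G G' : peq G G' -> ceq G G'.
Proof. intros H y; rewrite H; apply mteq_refl. Qed.
Lemma ceq_cand G D G' D' : ceq G G' -> ceq D D' -> ceq (cand G D) (cand G' D').
Proof. intros H1 H2 y; unfold cand; apply mteq_app; auto. Qed.
Lemma ceq_perm G G' : (forall y, Permutation (G y) (G' y)) -> ceq G G'.
Proof. intros H y; apply mteq_perm; auto. Qed.
Lemma ceq_cdrop n G G' : ceq G G' -> ceq (cdrop n G) (cdrop n G').
Proof. intros H y; apply H. Qed.
Lemma ceq_cins c d G G' : ceq G G' -> ceq (cins c d G) (cins c d G').
Proof. intros H y; unfold cins; dec; auto using mteq_refl. Qed.
Lemma ceq_cremove k G G' : ceq G G' -> ceq (cremove k G) (cremove k G').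
Proof. intros H y; unfold cremove; dec; auto. Qed.
Lemma ceq_tight G G' : ceq G G' -> tight_ctx G -> tight_ctx G'.
Proof. intros H T y; eapply mteq_tight; eauto. Qed.

Lemma tight_cand G D : tight_ctx (cand G D) -> tight_ctx G /\ tight_ctx D.
Proof.
  intro H; split; intro y; specialize (H y); unfold cand, tight_m in *;
  apply Forall_app in H; tauto.
Qed.
Lemma tight_cand2 G D : tight_ctx G -> tight_ctx D -> tight_ctx (cand G D).
Proof. intros H1 H2 y; unfold cand, tight_m; apply Forall_app; split; auto; apply H1 || apply H2. Qed.
Lemma tight_cempty : tight_ctx cempty.
Proof. intro; constructor. Qed.

Lemma ptyp_ext G k p A e m f G' k' :
  ptyp G k p A e m f -> (forall i, i < psize p -> G (k + i) = G' (k' + i)) ->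
  ptyp G' k' p A e m f.
Proof.
  intro H; revert G' k'; induction H; intros G' k' HE; simpl in *.
  - specialize (HE 0 ltac:(lia)). rewrite !Nat.add_0_r in HE. rewrite HE; constructor.
  - constructor.
    + apply IHptyp1; intros; apply HE; lia.
    + apply IHptyp2; intros i Hi. replace (k + psize p + i) with (k + (psize p + i)) by lia.
      replace (k' + psize p + i) with (k' + (psize p + i)) by lia. apply HE; lia.
  - constructor. intros i Hi. replace i with (k' + (i - k')) by lia.
    rewrite <- HE by (simpl in *; lia). apply H; simpl in *; lia.
Qed.

Lemma ptyp_ceq G k p A e m f G' k' :
  ptyp G k p A e m f -> (forall i, i < psize p -> mteq (G (k + i)) (G' (k' + i))) ->
  exists A', ptyp G' k' p A' e m f /\ mteq A A'.
Proof.
  intro H; revert G' k'; induction H; intros G' k' HE; simpl in *.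
  - specialize (HE 0 ltac:(lia)). rewrite !Nat.add_0_r in HE. eexists; split; [constructor|auto].
  - destruct (IHptyp1 G' k') as [A' [H1 E1]]; [intros; apply HE; lia|].
    destruct (IHptyp2 G' (k' + psize p)) as [B' [H2 E2]].
    { intros i Hi. replace (k + psize p + i) with (k + (psize p + i)) by lia.
      replace (k' + psize p + i) with (k' + (psize p + i)) by lia. apply HE; lia. }
    eexists; split; [constructor; eauto|]. apply mteq_single, teq_prod_mk; auto.
  - eexists; split; [|apply mteq_refl]. constructor. intros i Hi.
    replace i with (k' + (i - k')) by lia.
    eapply mteq_tight; [apply HE; simpl in *; lia|].
    apply H; simpl in *; lia.
Qed.

Lemma ptyp_pair_single G k p q A e m f : ptyp G k (PPair p q) A e m f -> exists a, A = [a].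
Proof. intro H; inversion H; subst; eauto. Qed.

Lemma mt_cons' G D t s A b e m f b' e' m' f' B E M F :
  typ G t s b e m f -> mtyp D t A b' e' m' f' ->
  B = b + b' -> E = e + e' -> M = m + m' -> F = f + f' ->
  mtyp (cand G D) t (s :: A) B E M F.
Proof. intros; subst; constructor; auto. Qed.

Lemma mtyp_single G t s b e m f : typ G t s b e m f -> mtyp (cand G cempty) t [s] b e m f.
Proof. intro; eapply mt_cons'; eauto; [constructor|..]; lia. Qed.

Lemma mtyp_single_inv D t s b e m f : mtyp D t [s] b e m f ->
  exists G, typ G t s b e m f /\ peq D (cand G cempty).
Proof.
  intro H; inversion H; subst. match goal with Hm : mtyp _ _ [] _ _ _ _ |- _ => inversion Hm; subst end.
  eexists; split; [rewrite !Nat.add_0_r; eauto|]. intro; reflexivity.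
Qed.

Lemma mtyp_nil_inv D t b e m f : mtyp D t [] b e m f -> D = cempty /\ b = 0 /\ e = 0 /\ m = 0 /\ f = 0.
Proof. intro H; inversion H; subst; auto. Qed.

Lemma ty_abs' G p t s A b e m f ep mp fp B E M F :
  typ G t s b e m f -> ptyp G 0 p A ep mp fp ->
  B = b + 1 -> E = e + ep -> M = m + mp -> F = f + fp ->
  typ (cdrop (psize p) G) (Lam p t) (TArr A s) B E M F.
Proof. intros; subst; econstructor; eauto. Qed.

Lemma ty_abs_p' G p t s b e m f F :
  typ G t s b e m f -> tight s -> (forall i, i < psize p -> tight_m (G i)) -> F = f + 1 ->
  typ (cdrop (psize p) G) (Lam p t) TM b e m F.
Proof. intros; subst; econstructor; eauto. Qed.

Lemma ty_app' G D t u A B s bt et mt ft bu eu mu fu b e m f :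
  typ G t (TArr A s) bt et mt ft -> mtyp D u B bu eu mu fu -> mteq A B ->
  b = bt + bu -> e = et + eu -> m = mt + mu -> f = ft + fu ->
  typ (cand G D) (App t u) s b e m f.
Proof. intros; subst; econstructor; eauto. Qed.

Lemma ty_app_p' G t u b e m f F :
  typ G t TN b e m f -> F = f + 1 -> typ G (App t u) TN b e m F.
Proof. intros; subst; econstructor; eauto. Qed.

Lemma ty_pair' G D t u A B bt et mt ft bu eu mu fu b e m f :
  mtyp G t A bt et mt ft -> mtyp D u B bu eu mu fu ->
  b = bt + bu -> e = et + eu -> m = mt + mu -> f = ft + fu ->
  typ (cand G D) (Pair t u) (TProd A B) b e m f.
Proof. intros; subst; econstructor; eauto. Qed.

Lemma ty_match' G D t p u s A B bt et mt ft ep mp fp bu eu mu fu b e m f :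
  typ G t s bt et mt ft -> ptyp G 0 p A ep mp fp ->
  mtyp D u B bu eu mu fu -> mteq A B ->
  b = bt + bu -> e = et + eu + ep -> m = mt + mu + mp -> f = ft + fu + fp ->
  typ (cand (cdrop (psize p) G) D) (Sub t p u) s b e m f.
Proof. intros; subst; econstructor; eauto. Qed.

Ltac unf := unfold cins, cremove, csingle, cand, cdrop, cempty in *.
Ltac eqargs := repeat match goal with
  | |- ?a ++ ?b = ?c ++ ?d => f_equal
  | |- ?G ?a = ?G ?b => apply (f_equal G); lia
  end.
Ltac psolve := unf; dec; simpl; rewrite ?app_nil_r; try lia; try reflexivity; try solve [eqargs].

Lemma mtyp_lift_of t t' (R : ctx -> ctx -> Prop)
  (Rnil : R cempty cempty)
  (Rcand : forall G D G' D', R G G' -> R D D' -> R (cand G D) (cand G' D')) :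
  (forall G s b e m f, typ G t s b e m f -> exists G', R G G' /\ typ G' t' s b e m f) ->
  forall G A b e m f, mtyp G t A b e m f -> exists G', R G G' /\ mtyp G' t' A b e m f.
Proof.
  intros HT G A b e m f H; induction H.
  - exists cempty; split; auto; constructor.
  - destruct (HT _ _ _ _ _ _ H) as [G1 [R1 T1]]. destruct (IHmtyp HT) as [D1 [R2 T2]].
    exists (cand G1 D1); split; auto; constructor; auto.
Qed.

Definition Rlift c d (G G' : ctx) := peq G' (cins c d G).

Lemma Rlift_nil c d : Rlift c d cempty cempty.
Proof. intro y; psolve. Qed.
Lemma Rlift_cand c d G D G' D' : Rlift c d G G' -> Rlift c d D D' -> Rlift c d (cand G D) (cand G' D').
Proof. unfold Rlift; intros H1 H2 y. unfold cand; rewrite H1, H2. psolve. Qed.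

Ltac mlift IH c d H X :=
  pose proof (mtyp_lift_of _ _ (Rlift c d) (Rlift_nil c d) (Rlift_cand c d)
       (fun G s b e m f H => IH G s b e m f H c d) _ _ _ _ _ _ H) as X.

Lemma typ_lift t : forall G s b e m f, typ G t s b e m f -> forall c d,
  exists G', peq G' (cins c d G) /\ typ G' (lift d c t) s b e m f.
Proof.
  induction t; intros G s b e m f H c d; inversion H; subst; simpl.
  - destruct (Nat.ltb_spec n c).
    + exists (csingle n [s]); split; [intro y; psolve|constructor].
    + exists (csingle (n + d) [s]); split; [intro y; psolve|constructor].
  - match goal with Ht : typ _ t _ _ _ _ _ |- _ =>
      destruct (IHt _ _ _ _ _ _ Ht (c + psize p) d) as [G1 [E1 T1]] end.
    exists (cdrop (psize p) G1); split.
    + intro y; unfold cdrop; rewrite E1; psolve.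
    + econstructor; eauto. eapply ptyp_ext; eauto. intros i Hi; simpl; rewrite E1; psolve.
  - match goal with Ht : typ _ t _ _ _ _ _ |- _ =>
      destruct (IHt _ _ _ _ _ _ Ht (c + psize p) d) as [G1 [E1 T1]] end.
    exists (cdrop (psize p) G1); split.
    + intro y; unfold cdrop; rewrite E1; psolve.
    + econstructor; eauto. intros i Hi; rewrite E1; unfold cins; dec; try lia; auto.
  - match goal with H1 : mtyp _ t1 _ _ _ _ _, H2 : mtyp _ t2 _ _ _ _ _ |- _ =>
      mlift IHt1 c d H1 X1; mlift IHt2 c d H2 X2 end.
    destruct X1 as [G1 [E1 T1]], X2 as [G2 [E2 T2]].
    exists (cand G1 G2); split; [apply Rlift_cand; auto|constructor; auto].
  - exists cempty; split; [intro; psolve|constructor].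
  - match goal with H1 : typ _ t1 _ _ _ _ _, H2 : mtyp _ t2 _ _ _ _ _ |- _ =>
      destruct (IHt1 _ _ _ _ _ _ H1 c d) as [G1 [E1 T1]]; mlift IHt2 c d H2 X2 end.
    destruct X2 as [G2 [E2 T2]].
    exists (cand G1 G2); split; [apply Rlift_cand; auto|econstructor; eauto].
  - match goal with H1 : typ _ t1 _ _ _ _ _ |- _ =>
      destruct (IHt1 _ _ _ _ _ _ H1 c d) as [G1 [E1 T1]] end.
    exists G1; split; auto. constructor; auto.
  - match goal with H1 : typ _ t1 _ _ _ _ _, H2 : mtyp _ t2 _ _ _ _ _ |- _ =>
      destruct (IHt1 _ _ _ _ _ _ H1 (c + psize p) d) as [G1 [E1 T1]]; mlift IHt2 c d H2 X2 end.
    destruct X2 as [G2 [E2 T2]].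
    exists (cand (cdrop (psize p) G1) G2); split.
    + intro y; unfold cand, cdrop; rewrite E1, E2; psolve.
    + econstructor; eauto. eapply ptyp_ext; eauto. intros i Hi; simpl; rewrite E1; psolve.
Qed.

Ltac munlift IH c d H X :=
  pose proof (mtyp_lift_of _ _ (fun X Y => Rlift c d Y X) (Rlift_nil c d)
       (fun G D G' D' h1 h2 => Rlift_cand c d G' D' G D h1 h2)
       (fun G s b e m f H => IH G s b e m f c d H) _ _ _ _ _ _ H) as X.

Lemma typ_unlift t : forall G' s b e m f c d, typ G' (lift d c t) s b e m f ->
  exists G, peq G' (cins c d G) /\ typ G t s b e m f.
Proof.
  induction t; intros G' s b e m f c d H; simpl in H.
  - destruct (Nat.ltb_spec n c); inversion H; subst.
    + exists (csingle n [s]); split; [intro y; psolve|constructor].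
    + exists (csingle n [s]); split; [intro y; psolve|constructor].
  - inversion H; subst.
    + match goal with Ht : typ _ (lift _ _ t) _ _ _ _ _ |- _ =>
        destruct (IHt _ _ _ _ _ _ _ _ Ht) as [G1 [E1 T1]] end.
      exists (cdrop (psize p) G1); split.
      * intro y; unfold cdrop; rewrite E1; psolve.
      * econstructor; eauto. eapply ptyp_ext; eauto. intros i Hi; simpl; rewrite E1; psolve.
    + match goal with Ht : typ _ (lift _ _ t) _ _ _ _ _ |- _ =>
        destruct (IHt _ _ _ _ _ _ _ _ Ht) as [G1 [E1 T1]] end.
      exists (cdrop (psize p) G1); split.
      * intro y; unfold cdrop; rewrite E1; psolve.
      * econstructor; eauto. intros i Hi.
        match goal with Hh : forall i, i < psize p -> tight_m _ |- _ => specialize (Hh i Hi); rewrite E1 in Hh; unfold cins in Hh;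
          destruct (Nat.ltb_spec i (c + psize p)); [exact Hh|lia] end.
  - inversion H; subst.
    + match goal with H1 : mtyp _ (lift _ _ t1) _ _ _ _ _, H2 : mtyp _ (lift _ _ t2) _ _ _ _ _ |- _ =>
        munlift IHt1 c d H1 X1; munlift IHt2 c d H2 X2 end.
      destruct X1 as [G1 [E1 T1]], X2 as [G2 [E2 T2]].
      exists (cand G1 G2); split; [apply Rlift_cand; auto|constructor; auto].
    + exists cempty; split; [intro; psolve|constructor].
  - inversion H; subst.
    + match goal with H1 : typ _ (lift _ _ t1) _ _ _ _ _, H2 : mtyp _ (lift _ _ t2) _ _ _ _ _ |- _ =>
        destruct (IHt1 _ _ _ _ _ _ _ _ H1) as [G1 [E1 T1]]; munlift IHt2 c d H2 X2 end.
      destruct X2 as [G2 [E2 T2]].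
      exists (cand G1 G2); split; [apply Rlift_cand; auto|econstructor; eauto].
    + match goal with H1 : typ _ (lift _ _ t1) _ _ _ _ _ |- _ =>
        destruct (IHt1 _ _ _ _ _ _ _ _ H1) as [G1 [E1 T1]] end.
      exists G1; split; auto. constructor; auto.
  - inversion H; subst.
    match goal with H1 : typ _ (lift _ _ t1) _ _ _ _ _, H2 : mtyp _ (lift _ _ t2) _ _ _ _ _ |- _ =>
      destruct (IHt1 _ _ _ _ _ _ _ _ H1) as [G1 [E1 T1]]; munlift IHt2 c d H2 X2 end.
    destruct X2 as [G2 [E2 T2]].
    exists (cand (cdrop (psize p) G1) G2); split.
    + intro y; unfold cand, cdrop; rewrite E1, E2; psolve.
    + econstructor; eauto. eapply ptyp_ext; eauto. intros i Hi; simpl; rewrite E1; psolve.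
Qed.

Lemma mtyp_perm D u B b e m f B' : mtyp D u B b e m f -> Permutation B B' ->
  exists D', mtyp D' u B' b e m f /\ ceq D D'.
Proof.
  intros H P; revert D b e m f H; induction P; intros D b e m f H.
  - exists D; split; auto using ceq_refl.
  - inversion H; subst. match goal with Hm : mtyp _ _ l _ _ _ _ |- _ =>
      destruct (IHP _ _ _ _ _ Hm) as [D1 [T1 E1]] end.
    eexists; split; [constructor; eauto|]. apply ceq_cand; auto using ceq_refl.
  - inversion H; subst. match goal with Hm : mtyp _ _ (_ :: l) _ _ _ _ |- _ => inversion Hm; subst end.
    eexists; split.
    + eapply mt_cons'; [eauto| eapply mt_cons'; [eauto|eauto|reflexivity..]|lia..].
    + apply ceq_perm; intro z; unfold cand.
      rewrite !app_assoc. apply Permutation_app_tail, Permutation_app_comm.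
  - destruct (IHP1 _ _ _ _ _ H) as [D1 [T1 E1]].
    destruct (IHP2 _ _ _ _ _ T1) as [D2 [T2 E2]].
    exists D2; split; auto. eapply ceq_trans; eauto.
Qed.

Lemma mtyp_app_split D u B1 B2 b e m f : mtyp D u (B1 ++ B2) b e m f ->
  exists D1 D2 b1 e1 m1 f1 b2 e2 m2 f2,
    mtyp D1 u B1 b1 e1 m1 f1 /\ mtyp D2 u B2 b2 e2 m2 f2 /\ peq D (cand D1 D2) /\
    b = b1 + b2 /\ e = e1 + e2 /\ m = m1 + m2 /\ f = f1 + f2.
Proof.
  revert D b e m f; induction B1; intros D b e m f H; simpl in H.
  - exists cempty, D, 0, 0, 0, 0, b, e, m, f; repeat split; auto; constructor.
  - inversion H; subst. match goal with Hm : mtyp _ _ (B1 ++ B2) _ _ _ _ |- _ => destruct (IHB1 _ _ _ _ _ Hm) as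
      (D1 & D2 & b1 & e1 & m1 & f1 & b2 & e2 & m2 & f2 & T1 & T2 & E & -> & -> & -> & ->) end.
    eexists (cand G D1), D2; do 8 eexists; split; [constructor; eauto|].
    split; eauto. split; [|lia]. intro y; unfold cand; rewrite E; unfold cand; apply app_assoc.
Qed.

Lemma mtyp_app D1 D2 u B1 B2 b1 e1 m1 f1 b2 e2 m2 f2 :
  mtyp D1 u B1 b1 e1 m1 f1 -> mtyp D2 u B2 b2 e2 m2 f2 ->
  exists D, mtyp D u (B1 ++ B2) (b1 + b2) (e1 + e2) (m1 + m2) (f1 + f2) /\ peq D (cand D1 D2).
Proof.
  intro H; revert D2 b2 e2 m2 f2; induction H; intros D2 b2 e2 m2 f2 H2; simpl.
  - exists D2; split; auto. intro; reflexivity.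
  - destruct (IHmtyp _ _ _ _ _ H2) as [D3 [T3 E3]].
    eexists; split; [eapply mt_cons'; eauto; lia|].
    intro y; unfold cand; rewrite E3; unfold cand; rewrite app_assoc; reflexivity.
Qed.

Lemma mtyp_split D u B b e m f A1 A2 : mtyp D u B b e m f -> mteq (A1 ++ A2) B ->
  exists D1 D2 B1 B2 b1 e1 m1 f1 b2 e2 m2 f2,
    mtyp D1 u B1 b1 e1 m1 f1 /\ mtyp D2 u B2 b2 e2 m2 f2 /\
    mteq A1 B1 /\ mteq A2 B2 /\ ceq D (cand D1 D2) /\
    b = b1 + b2 /\ e = e1 + e2 /\ m = m1 + m2 /\ f = f1 + f2.
Proof.
  intros H [B' [P F]].
  apply Forall2_app_inv_l in F as [B1 [B2 [F1 [F2 ->]]]].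
  destruct (mtyp_perm _ _ _ _ _ _ _ _ H P) as [D' [T' E']].
  destruct (mtyp_app_split _ _ _ _ _ _ _ _ T') as
      (D1 & D2 & b1 & e1 & m1 & f1 & b2 & e2 & m2 & f2 & T1 & T2 & E & -> & -> & -> & ->).
  exists D1, D2, B1, B2; do 8 eexists; repeat split; eauto.
  - exists B1; split; auto.
  - exists B2; split; auto.
  - eapply ceq_trans; eauto. apply peq_ceq; auto.
Qed.

Lemma comb k G1 G2 D D1 D2 G1' G2' :
  ceq G1' (cand (cremove k G1) (cins 0 k D1)) ->
  ceq G2' (cand (cremove k G2) (cins 0 k D2)) -> ceq D (cand D1 D2) ->
  ceq (cand G1' G2') (cand (cremove k (cand G1 G2)) (cins 0 k D)).
Proof.
  intros H1 H2 H3.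
  eapply ceq_trans; [apply ceq_cand; eauto|].
  eapply ceq_trans; [|apply ceq_cand; [apply ceq_refl|apply ceq_cins, ceq_sym, H3]].
  apply ceq_perm; intro y; unfold cand, cremove, cins; dec; simpl; try lia;
  rewrite ?app_nil_r; try apply Permutation_refl.
  rewrite !app_assoc; apply Permutation_app_tail.
  rewrite <- !app_assoc; apply Permutation_app_head, Permutation_app_comm.
Qed.

Lemma cdrop_cremove n k G : peq (cdrop n (cremove (k + n) G)) (cremove k (cdrop n G)).
Proof. intro y; psolve. Qed.
Lemma cdrop_cins n k D : peq (cdrop n (cins 0 (k + n) D)) (cins 0 k D).
Proof. intro y; psolve. Qed.

Definition SubstP t := forall G s b e m f k u D B bu eu mu fu,
  typ G t s b e m f -> mtyp D u B bu eu mu fu -> mteq (G k) B ->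
  exists G' s', typ G' (subst k u t) s' (b + bu) (e + eu) (m + mu) (f + fu) /\
    teq s s' /\ ceq G' (cand (cremove k G) (cins 0 k D)).

Lemma msubst_of t : SubstP t -> forall G A b e m f k u D B bu eu mu fu,
  mtyp G t A b e m f -> mtyp D u B bu eu mu fu -> mteq (G k) B ->
  exists G' A', mtyp G' (subst k u t) A' (b + bu) (e + eu) (m + mu) (f + fu) /\
    mteq A A' /\ ceq G' (cand (cremove k G) (cins 0 k D)).
Proof.
  intros HS G A b e m f k u D B bu eu mu fu H; revert D B bu eu mu fu.
  induction H; intros D0 B0 bu eu mu fu HU HE.
  - apply mteq_nil_l in HE; subst. apply mtyp_nil_inv in HU as (-> & -> & -> & -> & ->).
    exists cempty, []; split; [constructor|]. split; [apply mteq_refl|].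
    apply peq_ceq; intro y; psolve.
  - destruct (mtyp_split _ _ _ _ _ _ _ _ _ HU HE) as
      (D1 & D2 & B1 & B2 & b1 & e1 & m1 & f1 & b2 & e2 & m2 & f2 & U1 & U2 & Q1 & Q2 & ED & -> & -> & -> & ->).
    destruct (HS _ _ _ _ _ _ _ _ _ _ _ _ _ _ H U1 Q1) as (G1 & s1 & T1 & S1 & C1).
    destruct (IHmtyp HS _ _ _ _ _ _ U2 Q2) as (G2 & A2 & T2 & S2 & C2).
    exists (cand G1 G2), (s1 :: A2); split; [eapply mt_cons'; eauto; lia|].
    split; [apply (mteq_app [s] A [s1] A2); auto; apply mteq_single; auto|].
    eapply comb; eauto.
Qed.

Lemma ceq_low k n G D G1 : ceq G1 (cand (cremove (k + n) G) (cins 0 (k + n) D)) ->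
  forall i, i < n -> mteq (G (0 + i)) (G1 (0 + i)).
Proof.
  intros H i Hi. simpl. eapply mteq_trans; [|apply mteq_sym, H].
  apply mteq_perm. unfold cand, cremove, cins; dec; try lia; simpl; rewrite app_nil_r; auto.
Qed.

Lemma ceq_drop_sub k n G D G1 : ceq G1 (cand (cremove (k + n) G) (cins 0 (k + n) D)) ->
  ceq (cdrop n G1) (cand (cremove k (cdrop n G)) (cins 0 k D)).
Proof.
  intros H. eapply ceq_trans; [apply ceq_cdrop, H|]. apply peq_ceq; intro y; psolve.
Qed.

Lemma typ_subst t : SubstP t.
Proof.
  induction t; unfold SubstP; intros G s b e m f k u D B bu eu mu fu H HU HE;
    inversion H; subst; simpl.
  -
    destruct (Nat.eq_dec n k) as [<- | Hnk].
    + rewrite Nat.ltb_irrefl, Nat.eqb_refl.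
      unfold csingle in HE; rewrite Nat.eqb_refl in HE.
      apply mteq_single_l in HE as [s' [-> S']].
      apply mtyp_single_inv in HU as [Gu [TU HD]].
      destruct (typ_lift _ _ _ _ _ _ _ TU 0 n) as [G'' [E'' T'']].
      exists G'', s'; split; auto. split; auto.
      apply peq_ceq; intro y; rewrite E''. unfold cins, cremove, csingle, cand. rewrite ?HD.
      psolve.
    + assert (B = []) as ->.
      { apply mteq_nil_l. unfold csingle in HE. destruct (Nat.eqb_spec k n); [lia|auto]. }
      apply mtyp_nil_inv in HU as (-> & -> & -> & -> & ->).
      destruct (Nat.ltb_spec n k).
      * exists (csingle n [s]), s; split; [constructor|split; [apply teq_refl|]].
        apply peq_ceq; intro y; psolve.
      * destruct (Nat.eqb_spec n k); [lia|].
        exists (csingle (n - 1) [s]), s; split; [constructor|split; [apply teq_refl|]].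
        apply peq_ceq; intro y; psolve.
  -
    match goal with Ht : typ ?G0 t _ _ _ _ _, Hp : ptyp ?G0 0 p _ _ _ _ |- _ =>
      destruct (IHt _ _ _ _ _ _ (k + psize p) _ _ _ _ _ _ _ Ht HU) as (G1 & s1 & T1 & S1 & C1);
      [unfold cdrop in HE; exact HE|];
      destruct (ptyp_ceq _ _ _ _ _ _ _ G1 0 Hp (ceq_low _ _ _ _ _ C1)) as (A' & P' & QA) end.
    exists (cdrop (psize p) G1), (TArr A' s1); split; [eapply ty_abs'; eauto; lia|].
    split; [apply teq_arr_mk; auto|]. apply ceq_drop_sub; auto.
  -
    match goal with Ht : typ ?G0 t _ _ _ _ _ |- _ =>
      destruct (IHt _ _ _ _ _ _ (k + psize p) _ _ _ _ _ _ _ Ht HU) as (G1 & s1 & T1 & S1 & C1);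
      [unfold cdrop in HE; exact HE|] end.
    exists (cdrop (psize p) G1), TM; split; [eapply ty_abs_p'; eauto|].
    + eapply teq_tight; eauto.
    + intros i Hi. eapply mteq_tight; [apply (ceq_low _ _ _ _ _ C1 i Hi)|]. simpl; auto.
    + lia.
    + split; [apply teq_refl|]. apply ceq_drop_sub; auto.
  -
    unfold cand in HE.
    destruct (mtyp_split _ _ _ _ _ _ _ _ _ HU HE) as
      (D1 & D2 & B1 & B2 & b1 & e1 & m1 & f1 & b2 & e2 & m2 & f2 & U1 & U2 & Q1 & Q2 & ED & -> & -> & -> & ->).
    match goal with H1 : mtyp _ t1 _ _ _ _ _, H2 : mtyp _ t2 _ _ _ _ _ |- _ =>
      destruct (msubst_of _ IHt1 _ _ _ _ _ _ _ _ _ _ _ _ _ _ H1 U1 Q1) as (G1 & A1 & T1 & S1 & C1);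
      destruct (msubst_of _ IHt2 _ _ _ _ _ _ _ _ _ _ _ _ _ _ H2 U2 Q2) as (G2 & A2 & T2 & S2 & C2) end.
    exists (cand G1 G2), (TProd A1 A2); split; [eapply ty_pair'; eauto; lia|].
    split; [apply teq_prod_mk; auto|]. eapply comb; eauto.
  -
    assert (B = []) as -> by (apply mteq_nil_l; exact HE).
    apply mtyp_nil_inv in HU as (-> & -> & -> & -> & ->).
    exists cempty, TM; split; [constructor|split; [apply teq_refl|]].
    apply peq_ceq; intro y; psolve.
  -
    unfold cand in HE.
    destruct (mtyp_split _ _ _ _ _ _ _ _ _ HU HE) as
      (D1 & D2 & B1 & B2 & b1 & e1 & m1 & f1 & b2 & e2 & m2 & f2 & U1 & U2 & Q1 & Q2 & ED & -> & -> & -> & ->).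
    match goal with H1 : typ _ t1 _ _ _ _ _, H2 : mtyp _ t2 _ _ _ _ _ |- _ =>
      destruct (IHt1 _ _ _ _ _ _ _ _ _ _ _ _ _ _ H1 U1 Q1) as (G1 & s1 & T1 & S1 & C1);
      destruct (msubst_of _ IHt2 _ _ _ _ _ _ _ _ _ _ _ _ _ _ H2 U2 Q2) as (G2 & A2 & T2 & S2 & C2)
    end.
    apply teq_arr_inv in S1 as (A1 & s1' & -> & SA & Ss).
    assert (mteq A1 A2) by (eapply mteq_trans; [apply mteq_sym; exact SA|]; match goal with HQ : mteq A ?B0, S2 : mteq ?B0 A2 |- _ => exact (mteq_trans _ _ _ HQ S2) end).
    exists (cand G1 G2), s1'; split; [eapply ty_app'; eauto; lia|].
    split; auto. eapply comb; eauto.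
  -
    match goal with H1 : typ _ t1 _ _ _ _ _ |- _ =>
      destruct (IHt1 _ _ _ _ _ _ _ _ _ _ _ _ _ _ H1 HU HE) as (G1 & s1 & T1 & S1 & C1) end.
    apply teq_TN in S1; subst.
    exists G1, TN; split; [eapply ty_app_p'; eauto; lia|]. split; auto; constructor.
  -
    unfold cand, cdrop in HE.
    destruct (mtyp_split _ _ _ _ _ _ _ _ _ HU HE) as
      (D1 & D2 & B1 & B2 & b1 & e1 & m1 & f1 & b2 & e2 & m2 & f2 & U1 & U2 & Q1 & Q2 & ED & -> & -> & -> & ->).
    match goal with H1 : typ ?G0 t1 _ _ _ _ _, Hp : ptyp ?G0 0 p _ _ _ _,
                    H2 : mtyp _ t2 _ _ _ _ _, HQ : mteq _ _ |- _ =>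
      destruct (IHt1 _ _ _ _ _ _ (k + psize p) _ _ _ _ _ _ _ H1 U1 Q1) as (G1 & s1 & T1 & S1 & C1);
      destruct (ptyp_ceq _ _ _ _ _ _ _ G1 0 Hp (ceq_low _ _ _ _ _ C1)) as (A' & P' & QA);
      destruct (msubst_of _ IHt2 _ _ _ _ _ _ _ _ _ _ _ _ _ _ H2 U2 Q2) as (G2 & A2 & T2 & S2 & C2);
      idtac
    end.
    assert (mteq A' A2) by (match goal with HQ : mteq ?A ?B0, S2 : mteq ?B0 A2, QA : mteq ?A A' |- _ =>
      exact (mteq_trans _ _ _ (mteq_sym _ _ QA) (mteq_trans _ _ _ HQ S2)) end).
    exists (cand (cdrop (psize p) G1) G2), s1; split; [eapply ty_match'; eauto; lia|].
    split; auto. eapply comb; eauto. apply ceq_drop_sub; auto.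
Qed.

Definition ASubstP t := forall G' s b e m f k u,
  typ G' (subst k u t) s b e m f ->
  exists G D B s' b1 e1 m1 f1 b2 e2 m2 f2,
    typ G t s' b1 e1 m1 f1 /\ teq s s' /\ mtyp D u B b2 e2 m2 f2 /\ mteq (G k) B /\
    ceq G' (cand (cremove k G) (cins 0 k D)) /\
    b = b1 + b2 /\ e = e1 + e2 /\ m = m1 + m2 /\ f = f1 + f2.

Lemma masubst_of t : ASubstP t -> forall G' A b e m f k u,
  mtyp G' (subst k u t) A b e m f ->
  exists G D B A' b1 e1 m1 f1 b2 e2 m2 f2,
    mtyp G t A' b1 e1 m1 f1 /\ mteq A A' /\ mtyp D u B b2 e2 m2 f2 /\ mteq (G k) B /\
    ceq G' (cand (cremove k G) (cins 0 k D)) /\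
    b = b1 + b2 /\ e = e1 + e2 /\ m = m1 + m2 /\ f = f1 + f2.
Proof.
  intros HA G' A b e m f k u H. remember (subst k u t) as t0.
  induction H; subst.
  - exists cempty, cempty, [], []; do 8 exists 0; repeat split; try constructor; auto using mteq_refl.
    apply peq_ceq; intro y; psolve.
  - destruct (HA _ _ _ _ _ _ _ _ H) as
      (G1 & D1 & B1 & s1 & b1 & e1 & m1 & f1 & b2 & e2 & m2 & f2 & T1 & S1 & U1 & Q1 & C1 & -> & -> & -> & ->).
    destruct IHmtyp as
      (G2 & D2 & B2 & A2 & b3 & e3 & m3 & f3 & b4 & e4 & m4 & f4 & T2 & S2 & U2 & Q2 & C2 & -> & -> & -> & ->); auto.
    destruct (mtyp_app _ _ _ _ _ _ _ _ _ _ _ _ _ U1 U2) as [D3 [U3 E3]].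
    exists (cand G1 G2), D3, (B1 ++ B2), (s1 :: A2).
    do 8 eexists; split; [eapply mt_cons'; eauto|].
    split; [apply (mteq_app [s] A [s1] A2); auto; apply mteq_single; auto|].
    split; [eauto|]. split; [apply mteq_app; auto|].
    split; [eapply comb; eauto; apply peq_ceq; auto|].
    repeat split; lia.
Qed.

Lemma ceq_low' k n G D G1 : ceq G1 (cand (cremove (k + n) G) (cins 0 (k + n) D)) ->
  forall i, i < n -> mteq (G1 (0 + i)) (G (0 + i)).
Proof. intros H i Hi; apply mteq_sym; eapply ceq_low; eauto. Qed.

Lemma typ_asubst t : ASubstP t.
Proof.
  induction t; unfold ASubstP; intros G' s b e m f k u H; simpl in H.
  -
    destruct (Nat.ltb_spec n k).
    + inversion H; subst.
      exists (csingle n [s]), cempty, [], s; do 8 exists 0.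
      split; [constructor|]. split; [apply teq_refl|]. split; [constructor|].
      split; [unfold csingle; destruct (Nat.eqb_spec k n); [lia|apply mteq_refl]|].
      split; [apply peq_ceq; intro y; psolve|]. lia.
    + destruct (Nat.eqb_spec n k).
      * subst. destruct (typ_unlift _ _ _ _ _ _ _ _ _ H) as [Gu [EU TU]].
        exists (csingle k [s]), (cand Gu cempty), [s], s; do 4 exists 0; do 4 eexists.
        split; [constructor|]. split; [apply teq_refl|]. split; [apply mtyp_single; eauto|].
        split; [unfold csingle; rewrite Nat.eqb_refl; apply mteq_refl|].
        split; [apply peq_ceq; intro y; rewrite EU; psolve|]. lia.
      * inversion H; subst.
        exists (csingle n [s]), cempty, [], s; do 8 exists 0.
        split; [constructor|]. split; [apply teq_refl|]. split; [constructor|].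
        split; [unfold csingle; destruct (Nat.eqb_spec k n); [lia|apply mteq_refl]|].
        split; [apply peq_ceq; intro y; psolve|]. lia.
  -
    inversion H; subst.
    + match goal with Ht : typ ?G0 _ _ _ _ _ _, Hp : ptyp ?G0 0 p _ _ _ _ |- _ =>
        destruct (IHt _ _ _ _ _ _ _ _ Ht) as
          (G1 & D1 & B1 & s1 & b1 & e1 & m1 & f1 & b2 & e2 & m2 & f2 & T1 & S1 & U1 & Q1 & C1 & -> & -> & -> & ->);
        destruct (ptyp_ceq _ _ _ _ _ _ _ G1 0 Hp (ceq_low' _ _ _ _ _ C1)) as (A' & P' & QA) end.
      exists (cdrop (psize p) G1), D1, B1, (TArr A' s1); do 8 eexists.
      split; [eapply ty_abs'; eauto|]. split; [apply teq_arr_mk; auto|].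
      split; [eauto|]. split; [exact Q1|]. split; [apply ceq_drop_sub; auto|]. lia.
    + match goal with Ht : typ ?G0 _ _ _ _ _ _ |- _ =>
        destruct (IHt _ _ _ _ _ _ _ _ Ht) as
          (G1 & D1 & B1 & s1 & b1 & e1 & m1 & f1 & b2 & e2 & m2 & f2 & T1 & S1 & U1 & Q1 & C1 & -> & -> & -> & ->) end.
      exists (cdrop (psize p) G1), D1, B1, TM; do 8 eexists.
      split; [eapply ty_abs_p'; eauto|].
      * eapply teq_tight; eauto.
      * intros i Hi. eapply mteq_tight; [apply (ceq_low' _ _ _ _ _ C1 i Hi)|]. simpl; auto.
      * split; [apply teq_refl|]. split; [eauto|]. split; [exact Q1|].
        split; [apply ceq_drop_sub; auto|]. lia.
  -
    inversion H; subst.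
    + match goal with H1 : mtyp _ (subst _ _ t1) _ _ _ _ _, H2 : mtyp _ (subst _ _ t2) _ _ _ _ _ |- _ =>
        destruct (masubst_of _ IHt1 _ _ _ _ _ _ _ _ H1) as
          (G1 & D1 & B1 & A1 & b1 & e1 & m1 & f1 & b2 & e2 & m2 & f2 & T1 & S1 & U1 & Q1 & C1 & -> & -> & -> & ->);
        destruct (masubst_of _ IHt2 _ _ _ _ _ _ _ _ H2) as
          (G2 & D2 & B2 & A2 & b3 & e3 & m3 & f3 & b4 & e4 & m4 & f4 & T2 & S2 & U2 & Q2 & C2 & -> & -> & -> & ->) end.
      destruct (mtyp_app _ _ _ _ _ _ _ _ _ _ _ _ _ U1 U2) as [D3 [U3 E3]].
      exists (cand G1 G2), D3, (B1 ++ B2), (TProd A1 A2); do 8 eexists.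
      split; [eapply ty_pair'; eauto|]. split; [apply teq_prod_mk; auto|].
      split; [eauto|]. split; [apply mteq_app; auto|].
      split; [eapply comb; eauto; apply peq_ceq; auto|]. lia.
    + exists cempty, cempty, [], TM, 0, 0, 0, 1; do 4 exists 0.
      split; [constructor|]. split; [apply teq_refl|]. split; [constructor|].
      split; [apply mteq_refl|]. split; [apply peq_ceq; intro y; psolve|]. lia.
  -
    inversion H; subst.
    + match goal with H1 : typ _ (subst _ _ t1) _ _ _ _ _, H2 : mtyp _ (subst _ _ t2) _ _ _ _ _ |- _ =>
        destruct (IHt1 _ _ _ _ _ _ _ _ H1) as
          (G1 & D1 & B1 & s1 & b1 & e1 & m1 & f1 & b2 & e2 & m2 & f2 & T1 & S1 & U1 & Q1 & C1 & -> & -> & -> & ->);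
        destruct (masubst_of _ IHt2 _ _ _ _ _ _ _ _ H2) as
          (G2 & D2 & B2 & A2 & b3 & e3 & m3 & f3 & b4 & e4 & m4 & f4 & T2 & S2 & U2 & Q2 & C2 & -> & -> & -> & ->) end.
      apply teq_arr_inv in S1 as (A1 & s1' & -> & SA & Ss).
      match goal with HQ : mteq ?A0 ?B0, S2 : mteq ?B0 A2, SA : mteq ?A0 A1 |- _ =>
        assert (mteq A1 A2) by exact (mteq_trans _ _ _ (mteq_sym _ _ SA) (mteq_trans _ _ _ HQ S2)) end.
      destruct (mtyp_app _ _ _ _ _ _ _ _ _ _ _ _ _ U1 U2) as [D3 [U3 E3]].
      exists (cand G1 G2), D3, (B1 ++ B2), s1'; do 8 eexists.
      split; [eapply ty_app'; eauto|]. split; [auto|].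
      split; [eauto|]. split; [apply mteq_app; auto|].
      split; [eapply comb; eauto; apply peq_ceq; auto|]. lia.
    + match goal with H1 : typ _ (subst _ _ t1) _ _ _ _ _ |- _ =>
        destruct (IHt1 _ _ _ _ _ _ _ _ H1) as
          (G1 & D1 & B1 & s1 & b1 & e1 & m1 & f1 & b2 & e2 & m2 & f2 & T1 & S1 & U1 & Q1 & C1 & -> & -> & -> & ->) end.
      apply teq_TN in S1; subst.
      exists G1, D1, B1, TN; do 8 eexists.
      split; [eapply ty_app_p'; eauto|]. split; [constructor|].
      split; [eauto|]. split; [eauto|]. split; [eauto|]. lia.
  -
    inversion H; subst.
    match goal with H1 : typ ?G0 _ _ _ _ _ _, Hp : ptyp ?G0 0 p _ _ _ _,
                    H2 : mtyp _ (subst _ _ t2) _ _ _ _ _ |- _ =>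
      destruct (IHt1 _ _ _ _ _ _ _ _ H1) as
          (G1 & D1 & B1 & s1 & b1 & e1 & m1 & f1 & b2 & e2 & m2 & f2 & T1 & S1 & U1 & Q1 & C1 & -> & -> & -> & ->);
      destruct (ptyp_ceq _ _ _ _ _ _ _ G1 0 Hp (ceq_low' _ _ _ _ _ C1)) as (A' & P' & QA);
      destruct (masubst_of _ IHt2 _ _ _ _ _ _ _ _ H2) as
          (G2 & D2 & B2 & A2 & b3 & e3 & m3 & f3 & b4 & e4 & m4 & f4 & T2 & S2 & U2 & Q2 & C2 & -> & -> & -> & ->) end.
    match goal with HQ : mteq ?A0 ?B0, S2 : mteq ?B0 A2, SA : mteq ?A0 A' |- _ =>
      assert (mteq A' A2) by exact (mteq_trans _ _ _ (mteq_sym _ _ SA) (mteq_trans _ _ _ HQ S2)) end.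
    destruct (mtyp_app _ _ _ _ _ _ _ _ _ _ _ _ _ U1 U2) as [D3 [U3 E3]].
    exists (cand (cdrop (psize p) G1) G2), D3, (B1 ++ B2), s1; do 8 eexists.
    split; [eapply ty_match'; eauto|]. split; [auto|].
    split; [eauto|]. split; [apply mteq_app; auto|].
    split; [eapply comb; [apply ceq_drop_sub; eauto|eauto|apply peq_ceq; eauto]|]. lia.
Qed.

Inductive Ltyp : lctx -> ctx -> ctx -> nat -> nat -> nat -> nat -> Prop :=
| Lt_hole G : Ltyp Hole G G 0 0 0 0
| Lt_sub L p u Gi G1 D A B b e m f ep mp fp bu eu mu fu :
   Ltyp L Gi G1 b e m f -> ptyp G1 0 p A ep mp fp -> mtyp D u B bu eu mu fu -> mteq A B ->
   Ltyp (LSub L p u) Gi (cand (cdrop (psize p) G1) D) (b+bu) (e+eu+ep) (m+mu+mp) (f+fu+fp).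

Lemma plug_inv L : forall t0 G s b e m f, typ G (plug L t0) s b e m f ->
  exists Gi b1 e1 m1 f1 b2 e2 m2 f2, typ Gi t0 s b1 e1 m1 f1 /\ Ltyp L Gi G b2 e2 m2 f2 /\
    b = b1 + b2 /\ e = e1 + e2 /\ m = m1 + m2 /\ f = f1 + f2.
Proof.
  induction L; intros t0 G s b e m f H; simpl in H.
  - exists G, b, e, m, f, 0, 0, 0, 0; repeat split; auto; try lia; constructor.
  - inversion H; subst.
    match goal with H1 : typ _ (plug L t0) _ _ _ _ _ |- _ =>
      destruct (IHL _ _ _ _ _ _ _ H1) as (Gi & b1 & e1 & m1 & f1 & b2 & e2 & m2 & f2 & T & LT & -> & -> & -> & ->) end.
    exists Gi; do 8 eexists; split; eauto. split; [econstructor; eauto|]. lia.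
Qed.

Lemma plug_build L t Gi G s b1 e1 m1 f1 b2 e2 m2 f2 :
  typ Gi t s b1 e1 m1 f1 -> Ltyp L Gi G b2 e2 m2 f2 ->
  typ G (plug L t) s (b1 + b2) (e1 + e2) (m1 + m2) (f1 + f2).
Proof.
  intros T H; induction H; simpl.
  - rewrite !Nat.add_0_r; auto.
  - eapply ty_match'; eauto; lia.
Qed.

Lemma cins_add n q D : peq (cins 0 (n + q) D) (cins 0 n (cins 0 q D)).
Proof. intro y; psolve. Qed.

Lemma Ltyp_extend L Gi G b e m f : Ltyp L Gi G b e m f ->
  forall D Gi', ceq Gi' (cand Gi (cins 0 (nbL L) D)) ->
  exists G'', Ltyp L Gi' G'' b e m f /\ ceq G'' (cand G D).
Proof.
  induction 1; intros D0 Gi' HC; simpl in *.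
  - exists Gi'; split; [constructor|]. eapply ceq_trans; eauto.
    apply peq_ceq; intro y; psolve.
  - destruct (IHLtyp (cins 0 (psize p) D0) Gi') as [G1'' [LT C1]].
    { eapply ceq_trans; eauto. apply ceq_cand; [apply ceq_refl|]. apply peq_ceq, cins_add. }
    destruct (ptyp_ceq _ _ _ _ _ _ _ G1'' 0 H0) as [A' [P' QA]].
    { intros i Hi. eapply mteq_trans; [|apply mteq_sym, C1]. apply mteq_perm.
      unfold cand, cins; simpl; dec; try lia; rewrite app_nil_r; auto. }
    exists (cand (cdrop (psize p) G1'') D); split.
    + econstructor; eauto. eapply mteq_trans; [apply mteq_sym|]; eauto.
    + eapply ceq_trans; [apply ceq_cand; [apply ceq_cdrop, C1|apply ceq_refl]|].
      apply ceq_perm; intro y; unfold cand, cdrop, cins; dec; try lia; simpl.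
      replace (y + psize p - psize p) with y by lia.
      rewrite <- !app_assoc; apply Permutation_app_head, Permutation_app_comm.
Qed.

Lemma Ltyp_restrict L Gi G b e m f : Ltyp L Gi G b e m f ->
  forall D Gi0, ceq Gi (cand Gi0 (cins 0 (nbL L) D)) ->
  exists G', Ltyp L Gi0 G' b e m f /\ ceq G (cand G' D).
Proof.
  induction 1; intros D0 Gi0 HC; simpl in *.
  - exists Gi0; split; [constructor|]. eapply ceq_trans; eauto.
    apply peq_ceq; intro y; psolve.
  - destruct (IHLtyp (cins 0 (psize p) D0) Gi0) as [G1' [LT C1]].
    { eapply ceq_trans; eauto. apply ceq_cand; [apply ceq_refl|]. apply peq_ceq, cins_add. }
    destruct (ptyp_ceq _ _ _ _ _ _ _ G1' 0 H0) as [A' [P' QA]].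
    { intros i Hi. eapply mteq_trans; [apply C1|]. apply mteq_perm.
      unfold cand, cins; simpl; dec; try lia; rewrite app_nil_r; auto. }
    exists (cand (cdrop (psize p) G1') D); split.
    + econstructor; eauto. eapply mteq_trans; [apply mteq_sym|]; eauto.
    + eapply ceq_trans; [apply ceq_cand; [apply ceq_cdrop, C1|apply ceq_refl]|].
      apply ceq_perm; intro y; unfold cand, cdrop, cins; dec; try lia; simpl.
      replace (y + psize p - psize p) with y by lia.
      rewrite <- !app_assoc; apply Permutation_app_head, Permutation_app_comm.
Qed.

Lemma plug_pair_shape L a c G s b e m f : typ G (plug L (Pair a c)) s b e m f ->
  s = TM \/ exists A B, s = TProd A B.
Proof.
  intro H; apply plug_inv in H as (Gi & x1 & x2 & x3 & x4 & x5 & x6 & x7 & x8 & T & _).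
  inversion T; subst; eauto.
Qed.

Lemma plug_lam_shape L p t G s b e m f : typ G (plug L (Lam p t)) s b e m f ->
  s = TM \/ exists A s', s = TArr A s'.
Proof.
  intro H; apply plug_inv in H as (Gi & x1 & x2 & x3 & x4 & x5 & x6 & x7 & x8 & T & _).
  inversion T; subst; eauto.
Qed.

Lemma mtyp_lift D u B b e m f : mtyp D u B b e m f -> forall c d,
  exists D', peq D' (cins c d D) /\ mtyp D' (lift d c u) B b e m f.
Proof.
  intros H c d.
  exact (mtyp_lift_of _ _ (Rlift c d) (Rlift_nil c d) (Rlift_cand c d)
       (fun G s b e m f H => typ_lift _ G s b e m f H c d) _ _ _ _ _ _ H).
Qed.

Lemma mtyp_unlift D u B b e m f c d : mtyp D (lift d c u) B b e m f ->
  exists D0, peq D (cins c d D0) /\ mtyp D0 u B b e m f.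
Proof.
  intros H.
  exact (mtyp_lift_of _ _ (fun X Y => Rlift c d Y X) (Rlift_nil c d)
       (fun G D G' D' h1 h2 => Rlift_cand c d G' D' G D h1 h2)
       (fun G s b e m f H => typ_unlift _ G s b e m f c d H) _ _ _ _ _ _ H).
Qed.

Lemma typ_cnt G t s b e m f b' e' m' f' : typ G t s b e m f ->
  b = b' -> e = e' -> m = m' -> f = f' -> typ G t s b' e' m' f'.
Proof. intros; subst; auto. Qed.

Ltac perm_solve :=
  repeat rewrite <- app_assoc;
  first
  [ apply Permutation_refl
  | apply Permutation_app_comm
  | apply Permutation_app_head; perm_solve
  | eapply Permutation_trans; [apply Permutation_app_comm|]; repeat rewrite <- app_assoc;
    apply Permutation_app_head; perm_solve ].

Definition SRP t := forall k t', hstep t k t' -> forall G s b e m f, typ G t s b e m f ->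
  exists G' s' b' e' m', typ G' t' s' b' e' m' f /\ ceq G G' /\ teq s s' /\
    b = isB k + b' /\ e = isE k + e' /\ m = isM k + m'.

Lemma SR_beta L p t0 u G s b e m f : typ G (App (plug L (Lam p t0)) u) s b e m f ->
  exists G' b', typ G' (plug L (Sub t0 p (lift (nbL L) 0 u))) s b' e m f /\ ceq G G' /\ b = 1 + b'.
Proof.
  intro H; inversion H; subst.
  - match goal with H1 : typ _ (plug _ _) _ _ _ _ _, H2 : mtyp _ u _ _ _ _ _ |- _ =>
      apply plug_inv in H1 as (Gi & b1 & e1 & m1 & f1 & b2 & e2 & m2 & f2 & T & LT & -> & -> & -> & ->);
      destruct (mtyp_lift _ _ _ _ _ _ _ H2 0 (nbL L)) as [D' [ED UD]] end.
    inversion T; subst.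
    match goal with H1 : typ ?G0 t0 _ _ _ _ _, Hp : ptyp ?G0 0 p _ _ _ _, HQ : mteq _ _ |- _ =>
      pose proof (ty_match' _ _ _ _ _ _ _ _ _ _ _ _ _ _ _ _ _ _ _ _ _ _ _ H1 Hp UD HQ
                   eq_refl eq_refl eq_refl eq_refl) as TM1 end.
    match type of LT with Ltyp _ ?Gi _ _ _ _ _ =>
      destruct (Ltyp_extend _ _ _ _ _ _ _ LT D (cand Gi D')) as [G'' [LT' C]] end.
    { apply peq_ceq; intro y; unfold cand; rewrite ED; reflexivity. }
    pose proof (plug_build _ _ _ _ _ _ _ _ _ _ _ _ _ TM1 LT') as TB.
    do 2 eexists; split; [eapply typ_cnt; [exact TB|..]; try reflexivity; lia|]. split; [apply ceq_sym; auto|]. lia.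
  - match goal with H1 : typ _ (plug _ _) TN _ _ _ _ |- _ =>
      apply plug_lam_shape in H1 as [? | (? & ? & ?)]; discriminate end.
Qed.

Lemma SR_e t1 u G s b e m f : typ G (Sub t1 PVar u) s b e m f ->
  exists G' s' e', typ G' (subst 0 u t1) s' b e' m f /\ ceq G G' /\ teq s s' /\ e = 1 + e'.
Proof.
  intro H; inversion H; subst.
  match goal with H1 : typ ?G0 t1 _ _ _ _ _, Hp : ptyp ?G0 0 PVar _ _ _ _,
                  H2 : mtyp _ u _ _ _ _ _, HQ : mteq _ _ |- _ =>
    inversion Hp; subst;
    destruct (typ_subst _ _ _ _ _ _ _ 0 _ _ _ _ _ _ _ H1 H2 HQ) as (G' & s' & T' & S' & C') end.
  do 3 eexists; split; [eapply typ_cnt; [exact T'|..]; try reflexivity; lia|]. split; [|split; [auto|lia]].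
  eapply ceq_trans; [|apply ceq_sym; exact C'].
  apply peq_ceq; intro y; simpl; psolve.
Qed.

Lemma SR_m t1 p1 p2 L u1 u2 G s b e m f :
  typ G (Sub t1 (PPair p1 p2) (plug L (Pair u1 u2))) s b e m f ->
  exists G' m', typ G' (plug L (Sub (Sub (lift (nbL L) (psize p1 + psize p2) t1) p1
                   (lift (psize p2) 0 u1)) p2 u2)) s b e m' f /\ ceq G G' /\ m = 1 + m'.
Proof.
  intro H; inversion H; subst.
  match goal with Hp : ptyp _ 0 (PPair p1 p2) _ _ _ _ |- _ => inversion Hp; subst end.
  2:{ match goal with HQ : mteq [TN] _, HU : mtyp _ _ _ _ _ _ _ |- _ =>
        apply mteq_single_l in HQ as [sb [-> Sb]]; apply teq_TN in Sb; subst;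
        apply mtyp_single_inv in HU as [Ds [TD _]];
        apply plug_pair_shape in TD as [? | (? & ? & ?)]; discriminate end. }
  match goal with HQ : mteq [TProd _ _] _, HU : mtyp _ _ _ _ _ _ _ |- _ =>
    apply mteq_single_l in HQ as [sb [-> Sb]];
    apply teq_prod_inv in Sb as (B1 & B2 & -> & Q1 & Q2);
    apply mtyp_single_inv in HU as [Ds [TD ED]] end.
  apply plug_inv in TD as (Gi & b1 & e1 & m1 & f1 & b2 & e2 & m2 & f2 & TP & LT & -> & -> & -> & ->).
  inversion TP; subst.
  match goal with H1 : typ ?G0 t1 _ _ _ _ _, P1 : ptyp ?G0 0 p1 ?A1 ?ep ?mp ?fp, P2 : ptyp ?G0 _ p2 ?A2 ?eq ?mq ?fq,
        U1 : mtyp _ u1 _ _ _ _ _, U2 : mtyp ?Du2 u2 _ _ _ _ _ |- _ =>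
    destruct (typ_lift _ _ _ _ _ _ _ H1 (psize p1 + psize p2) (nbL L)) as [G1L [E1 T1]];
    destruct (mtyp_lift _ _ _ _ _ _ _ U1 0 (psize p2)) as [D1L [E2 T2]];
    assert (P1' : ptyp G1L 0 p1 A1 ep mp fp) by
      (eapply ptyp_ext; [exact P1|]; intros i Hi; rewrite E1; psolve);
    pose proof (ty_match' _ _ _ _ _ _ _ _ _ _ _ _ _ _ _ _ _ _ _ _ _ _ _ T1 P1' T2 Q1
                   eq_refl eq_refl eq_refl eq_refl) as TM1;
    assert (P2' : ptyp (cand (cdrop (psize p1) G1L) D1L) 0 p2 A2 eq mq fq) by
      (eapply ptyp_ext; [exact P2|]; intros i Hi; unfold cand, cdrop; rewrite E1, E2; psolve);
    pose proof (ty_match' _ _ _ _ _ _ _ _ _ _ _ _ _ _ _ _ _ _ _ _ _ _ _ TM1 P2' U2 Q2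
                   eq_refl eq_refl eq_refl eq_refl) as TM2;
    destruct (Ltyp_extend _ _ _ _ _ _ _ LT (cdrop (psize p1 + psize p2) G0)
                (cand (cdrop (psize p2) (cand (cdrop (psize p1) G1L) D1L)) Du2))
      as [G'' [LT' C]]
  end.
  { apply ceq_perm; intro y; unfold cand, cdrop; rewrite E1, E2.
    unfold cins; dec; try lia; simpl; rewrite ?app_nil_r;
    replace (y + psize p2 - psize p2) with y by lia.
    - apply Permutation_refl.
    - replace (y + psize p2 + psize p1 - nbL L) with (y - nbL L + (psize p1 + psize p2)) by lia.
      perm_solve. }
  pose proof (plug_build _ _ _ _ _ _ _ _ _ _ _ _ _ TM2 LT') as TB.
  do 2 eexists; split; [eapply typ_cnt; [exact TB|..]; try reflexivity; lia|]. split; [|lia].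
  eapply ceq_trans; [|apply ceq_sym; exact C].
  apply ceq_perm; intro y; unfold cand, cdrop; rewrite ED; unfold cand, cempty; simpl.
  rewrite app_nil_r. apply Permutation_app_comm.
Qed.

Lemma SR t : SRP t.
Proof.
  induction t; unfold SRP; intros k t' Hs G s b e m f H; simpl in Hs.
  - contradiction.
  - destruct Hs as [t1' [Hs ->]]. inversion H; subst.
    + match goal with Ht : typ ?G0 t _ _ _ _ _, Hp : ptyp ?G0 0 p _ _ _ _ |- _ =>
        destruct (IHt _ _ Hs _ _ _ _ _ _ Ht) as (G1 & s1 & b1 & e1 & m1 & T1 & C1 & S1 & -> & -> & ->);
        destruct (ptyp_ceq _ _ _ _ _ _ _ G1 0 Hp) as (A' & P' & QA); [intros; apply C1|] end.
      exists (cdrop (psize p) G1), (TArr A' s1); do 3 eexists.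
      split; [eapply ty_abs'; eauto|]. split; [apply ceq_cdrop; auto|].
      split; [apply teq_arr_mk; auto|]. repeat split; lia.
    + match goal with Ht : typ ?G0 t _ _ _ _ _ |- _ =>
        destruct (IHt _ _ Hs _ _ _ _ _ _ Ht) as (G1 & s1 & b1 & e1 & m1 & T1 & C1 & S1 & -> & -> & ->) end.
      exists (cdrop (psize p) G1), TM; do 3 eexists.
      split; [eapply ty_abs_p'; eauto|].
      * eapply teq_tight; eauto.
      * intros i Hi; eapply mteq_tight; [apply C1|]; auto.
      * split; [apply ceq_cdrop; auto|]. split; [constructor|]. repeat split; lia.
  - contradiction.
  - destruct Hs as [[-> (L & p & t0 & -> & ->)] | [NA (t1' & Hs & ->)]].
    + destruct (SR_beta _ _ _ _ _ _ _ _ _ _ H) as (G' & b' & T' & C' & ->).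
      exists G', s, b', e, m; repeat split; auto using teq_refl.
    + inversion H; subst.
      * match goal with Ht : typ _ t1 _ _ _ _ _ |- _ =>
          destruct (IHt1 _ _ Hs _ _ _ _ _ _ Ht) as (G1 & s1 & b1 & e1 & m1 & T1 & C1 & S1 & -> & -> & ->) end.
        apply teq_arr_inv in S1 as (A1 & s1' & -> & SA & Ss).
        exists (cand G1 D), s1'; do 3 eexists.
        split; [eapply ty_app'; eauto|].
        -- eapply mteq_trans; [apply mteq_sym; exact SA|]; auto.
        -- split; [apply ceq_cand; auto using ceq_refl|]. split; auto. repeat split; lia.
      * match goal with Ht : typ _ t1 _ _ _ _ _ |- _ =>
          destruct (IHt1 _ _ Hs _ _ _ _ _ _ Ht) as (G1 & s1 & b1 & e1 & m1 & T1 & C1 & S1 & -> & -> & ->) end.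
        apply teq_TN in S1; subst.
        exists G1, TN; do 3 eexists. split; [eapply ty_app_p'; eauto|]. split; auto.
        split; [constructor|]. repeat split; lia.
  - destruct Hs as [(t1' & Hs & ->) | [NR Hs]].
    + inversion H; subst.
      match goal with Ht : typ ?G0 t1 _ _ _ _ _, Hp : ptyp ?G0 0 p _ _ _ _, HQ : mteq ?A0 _ |- _ =>
        destruct (IHt1 _ _ Hs _ _ _ _ _ _ Ht) as (G1 & s1 & b1 & e1 & m1 & T1 & C1 & S1 & -> & -> & ->);
        destruct (ptyp_ceq _ _ _ _ _ _ _ G1 0 Hp) as (A' & P' & QA); [intros; apply C1|];
        assert (mteq A' B) by (eapply mteq_trans; [apply mteq_sym; exact QA|exact HQ]) end.
      exists (cand (cdrop (psize p) G1) D), s1; do 3 eexists.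
      split; [eapply ty_match'; eauto|].
      split; [apply ceq_cand; [apply ceq_cdrop; auto|apply ceq_refl]|]. split; auto. repeat split; lia.
    + destruct p as [|p1 p2].
      * destruct Hs as [-> ->].
        destruct (SR_e _ _ _ _ _ _ _ _ H) as (G' & s' & e' & T' & C' & S' & ->).
        exists G', s', b, e', m; repeat split; auto.
      * destruct Hs as [[-> (L & u1 & u2 & -> & ->)] | (u' & Hs & ->)].
        -- destruct (SR_m _ _ _ _ _ _ _ _ _ _ _ _ H) as (G' & m' & T' & C' & ->).
           exists G', s, b, e, m'; repeat split; auto using teq_refl.
        -- inversion H; subst.
           match goal with Hp : ptyp _ 0 (PPair p1 p2) _ _ _ _, HQ : mteq _ _,
                           HU : mtyp _ t2 _ _ _ _ _ |- _ =>
             destruct (ptyp_pair_single _ _ _ _ _ _ _ _ Hp) as [a ->];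
             apply mteq_single_l in HQ as [sb [-> Sb]];
             apply mtyp_single_inv in HU as [Du [TU EU]] end.
           destruct (IHt2 _ _ Hs _ _ _ _ _ _ TU) as (G2 & s2 & b2 & e2 & m2 & T2 & C2 & S2 & -> & -> & ->).
           assert (QQ : mteq [a] [s2]) by (apply mteq_single; eapply teq_trans; eauto).
           match goal with Ht : typ ?G0 t1 _ _ _ _ _, Hp : ptyp ?G0 0 _ _ _ _ _ |- _ =>
             pose proof (ty_match' _ _ _ _ _ _ _ _ _ _ _ _ _ _ _ _ _ _ _ _ _ _ _ Ht Hp
               (mtyp_single _ _ _ _ _ _ _ T2) QQ eq_refl eq_refl eq_refl eq_refl) as TT end.
           do 5 eexists; split; [exact TT|].
           split; [|split; [apply teq_refl|repeat split; lia]].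
           apply ceq_cand; [apply ceq_refl|]. eapply ceq_trans; [apply peq_ceq; exact EU|].
           apply ceq_cand; auto using ceq_refl.
Qed.

Lemma SE_beta L p t0 u G' s b e m f :
  typ G' (plug L (Sub t0 p (lift (nbL L) 0 u))) s b e m f ->
  exists G, typ G (App (plug L (Lam p t0)) u) s (1 + b) e m f /\ ceq G G'.
Proof.
  intro H.
  apply plug_inv in H as (Gi & b1 & e1 & m1 & f1 & b2 & e2 & m2 & f2 & T & LT & -> & -> & -> & ->).
  inversion T; subst.
  match goal with H1 : typ ?G0 t0 _ _ _ _ _, Hp : ptyp ?G0 0 p _ _ _ _,
                  HU : mtyp _ (lift _ _ u) _ _ _ _ _, HQ : mteq _ _ |- _ =>
    destruct (mtyp_unlift _ _ _ _ _ _ _ _ _ HU) as [D0 [ED UD]];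
    pose proof (ty_abs' _ _ _ _ _ _ _ _ _ _ _ _ _ _ _ _ H1 Hp eq_refl eq_refl eq_refl eq_refl) as TL;
    destruct (Ltyp_restrict _ _ _ _ _ _ _ LT D0 (cdrop (psize p) G0)) as [G1 [LT' C]];
    [apply peq_ceq; intro y; unfold cand; rewrite ED; reflexivity|];
    pose proof (plug_build _ _ _ _ _ _ _ _ _ _ _ _ _ TL LT') as TB;
    pose proof (ty_app' _ _ _ _ _ _ _ _ _ _ _ _ _ _ _ _ _ _ _ TB UD HQ eq_refl eq_refl eq_refl eq_refl) as TA
  end.
  eexists; split; [eapply typ_cnt; [exact TA|..]; lia|]. apply ceq_sym; auto.
Qed.

Lemma SE_e t1 u G' s b e m f : typ G' (subst 0 u t1) s b e m f ->
  exists G s', typ G (Sub t1 PVar u) s' b (1 + e) m f /\ ceq G G' /\ teq s' s.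
Proof.
  intro H.
  destruct (typ_asubst _ _ _ _ _ _ _ _ _ H) as
    (G0 & D & B & s'' & b1 & e1 & m1 & f1 & b2 & e2 & m2 & f2 & T1 & S1 & U1 & Q1 & C1 & -> & -> & -> & ->).
  pose proof (ty_match' _ _ _ _ _ _ _ _ _ _ _ _ _ _ _ _ _ _ _ _ _ _ _ T1 (pt_var G0 0) U1 Q1
                eq_refl eq_refl eq_refl eq_refl) as TT.
  do 2 eexists; split; [eapply typ_cnt; [exact TT|..]; simpl; lia|].
  split; [|apply teq_sym; auto].
  eapply ceq_trans; [|apply ceq_sym; exact C1]. apply peq_ceq; intro y; simpl; psolve.
Qed.

Lemma SE_m t1 p1 p2 L u1 u2 G' s b e m f :
  typ G' (plug L (Sub (Sub (lift (nbL L) (psize p1 + psize p2) t1) p1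
                   (lift (psize p2) 0 u1)) p2 u2)) s b e m f ->
  exists G, typ G (Sub t1 (PPair p1 p2) (plug L (Pair u1 u2))) s b e (1 + m) f /\ ceq G G'.
Proof.
  intro H.
  apply plug_inv in H as (Gi & b1 & e1 & m1 & f1 & b2 & e2 & m2 & f2 & T & LT & -> & -> & -> & ->).
  inversion T; subst.
  match goal with H1 : typ _ (Sub _ p1 _) _ _ _ _ _ |- _ => inversion H1; subst end.
  rename H3 into H1, H6 into P1, H14 into U1, H15 into Q1, H4 into P2, H10 into U2, H11 into Q2.
  destruct (typ_unlift _ _ _ _ _ _ _ _ _ H1) as [Gt [E1 T1]].
  destruct (mtyp_unlift _ _ _ _ _ _ _ _ _ U1) as [Du1 [E2 T2]].
  assert (P1' : ptyp Gt 0 p1 A0 ep0 mp0 fp0) by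
    (eapply ptyp_ext; [exact P1|]; intros i Hi; rewrite E1; psolve).
  assert (P2' : ptyp Gt (0 + psize p1) p2 A ep mp fp) by
    (eapply ptyp_ext; [exact P2|]; intros i Hi; unfold cand, cdrop; rewrite E1, E2; psolve).
  pose proof (pt_pair _ _ _ _ _ _ _ _ _ _ _ _ P1' P2') as XPP.
  pose proof (ty_pair' _ _ _ _ _ _ _ _ _ _ _ _ _ _ _ _ _ _ T2 U2
                  eq_refl eq_refl eq_refl eq_refl) as XTP.
  destruct (Ltyp_restrict _ _ _ _ _ _ _ LT (cdrop (psize p1 + psize p2) Gt) (cand Du1 D))
      as [G2 [LT' C]].
  { apply ceq_perm; intro y; unfold cand, cdrop; rewrite E1, E2.
    unfold cins; dec; try lia; simpl; rewrite ?app_nil_r;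
    replace (y + psize p2 - psize p2) with y by lia.
    - apply Permutation_refl.
    - replace (y + psize p2 + psize p1 - nbL L) with (y - nbL L + (psize p1 + psize p2)) by lia.
      perm_solve. }
  pose proof (plug_build _ _ _ _ _ _ _ _ _ _ _ _ _ XTP LT') as XTB.
  pose proof (ty_match' _ _ _ _ _ _ _ _ _ _ _ _ _ _ _ _ _ _ _ _ _ _ _ T1 XPP
                  (mtyp_single _ _ _ _ _ _ _ XTB) (mteq_single _ _ (teq_prod_mk _ _ _ _ Q1 Q2))
                  eq_refl eq_refl eq_refl eq_refl) as XTT.
  eexists; split; [eapply typ_cnt; [exact XTT|..]; lia|].
  eapply ceq_trans; [|apply ceq_sym; exact C].
  apply ceq_perm; intro y; unfold cand, cdrop, cempty; simpl.
  rewrite app_nil_r. apply Permutation_app_comm.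
Qed.

Definition SEP t := forall k t', hstep t k t' -> forall G' s' b e m f, typ G' t' s' b e m f ->
  exists G s, typ G t s (isB k + b) (isE k + e) (isM k + m) f /\ ceq G G' /\ teq s s'.

Lemma SE t : SEP t.
Proof.
  induction t; unfold SEP; intros k t' Hs G' s' b e m f H; simpl in Hs.
  - contradiction.
  - destruct Hs as [t1' [Hs ->]]. inversion H; subst.
    + match goal with Ht : typ ?G0 t1' _ _ _ _ _, Hp : ptyp ?G0 0 p _ _ _ _ |- _ =>
        destruct (IHt _ _ Hs _ _ _ _ _ _ Ht) as (G1 & s1 & T1 & C1 & S1);
        destruct (ptyp_ceq _ _ _ _ _ _ _ G1 0 Hp) as (A' & P' & QA); [intros; apply mteq_sym, C1|] end.
      exists (cdrop (psize p) G1), (TArr A' s1).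
      split; [eapply ty_abs'; eauto; lia|]. split; [apply ceq_cdrop; auto|].
      apply teq_arr_mk; auto using mteq_sym.
    + match goal with Ht : typ ?G0 t1' _ _ _ _ _ |- _ =>
        destruct (IHt _ _ Hs _ _ _ _ _ _ Ht) as (G1 & s1 & T1 & C1 & S1) end.
      exists (cdrop (psize p) G1), TM.
      split; [eapply ty_abs_p'; eauto|].
      * eapply teq_tight; [apply teq_sym|]; eauto.
      * intros i Hi; eapply mteq_tight; [apply mteq_sym, C1|]; auto.
      * split; [apply ceq_cdrop; auto|constructor].
  - contradiction.
  - destruct Hs as [[-> (L & p & t0 & -> & ->)] | [NA (t1' & Hs & ->)]].
    + destruct (SE_beta _ _ _ _ _ _ _ _ _ _ H) as (G & T & C).
      exists G, s'; split; [exact T|]. split; auto using teq_refl.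
    + inversion H; subst.
      * match goal with Ht : typ _ t1' _ _ _ _ _ |- _ =>
          destruct (IHt1 _ _ Hs _ _ _ _ _ _ Ht) as (G1 & s1 & T1 & C1 & S1) end.
        apply teq_sym, teq_arr_inv in S1 as (A1 & s1' & -> & SA & Ss).
        match goal with HU : mtyp ?D0 t2 ?B0 _ _ _ _, HQ : mteq ?A0 ?B0 |- _ =>
          assert (QQ : mteq A1 B0) by (eapply mteq_trans; [apply mteq_sym; exact SA|exact HQ]);
          pose proof (ty_app' _ _ _ _ _ _ _ _ _ _ _ _ _ _ _ _ _ _ _ T1 HU QQ eq_refl eq_refl eq_refl eq_refl) as XTA end.
        do 2 eexists; split; [eapply typ_cnt; [exact XTA|..]; lia|].
        split; [apply ceq_cand; auto using ceq_refl|]. apply teq_sym; auto.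
      * match goal with Ht : typ _ t1' _ _ _ _ _ |- _ =>
          destruct (IHt1 _ _ Hs _ _ _ _ _ _ Ht) as (G1 & s1 & T1 & C1 & S1) end.
        apply teq_TN_r in S1; subst.
        exists G1, TN. split; [eapply ty_app_p'; eauto; lia|]. split; auto. constructor.
  - destruct Hs as [(t1' & Hs & ->) | [NR Hs]].
    + inversion H; subst.
      match goal with Ht : typ ?G0 t1' _ _ _ _ _, Hp : ptyp ?G0 0 p _ _ _ _, HQ : mteq ?A0 _ |- _ =>
        destruct (IHt1 _ _ Hs _ _ _ _ _ _ Ht) as (G1 & s1 & T1 & C1 & S1);
        destruct (ptyp_ceq _ _ _ _ _ _ _ G1 0 Hp) as (A' & P' & QA); [intros; apply mteq_sym, C1|];
        assert (mteq A' B) by (eapply mteq_trans; [apply mteq_sym; exact QA|exact HQ]) end.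
      exists (cand (cdrop (psize p) G1) D), s1.
      split; [eapply ty_match'; eauto; lia|].
      split; [apply ceq_cand; [apply ceq_cdrop; auto|apply ceq_refl]|]. auto.
    + destruct p as [|p1 p2].
      * destruct Hs as [-> ->].
        destruct (SE_e _ _ _ _ _ _ _ _ H) as (G & s & T & C & S).
        exists G, s; auto.
      * destruct Hs as [[-> (L & u1 & u2 & -> & ->)] | (u' & Hs & ->)].
        -- destruct (SE_m _ _ _ _ _ _ _ _ _ _ _ _ H) as (G & T & C).
           exists G, s'; split; [exact T|]. split; auto using teq_refl.
        -- inversion H; subst.
           match goal with Hp : ptyp _ 0 (PPair p1 p2) _ _ _ _, HQ : mteq _ _,
                           HU : mtyp _ u' _ _ _ _ _ |- _ =>
             destruct (ptyp_pair_single _ _ _ _ _ _ _ _ Hp) as [a ->];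
             apply mteq_single_l in HQ as [sb [-> Sb]];
             apply mtyp_single_inv in HU as [Du [TU EU]] end.
           destruct (IHt2 _ _ Hs _ _ _ _ _ _ TU) as (G2 & s2 & T2 & C2 & S2).
           assert (QQ : mteq [a] [s2]) by (apply mteq_single; eapply teq_trans; [eauto|apply teq_sym; eauto]).
           match goal with Ht : typ ?G0 t1 _ _ _ _ _, Hp : ptyp ?G0 0 _ _ _ _ _ |- _ =>
             pose proof (ty_match' _ _ _ _ _ _ _ _ _ _ _ _ _ _ _ _ _ _ _ _ _ _ _ Ht Hp
               (mtyp_single _ _ _ _ _ _ _ T2) QQ eq_refl eq_refl eq_refl eq_refl) as XTT end.
           do 2 eexists; split; [eapply typ_cnt; [exact XTT|..]; lia|].
           split; [|apply teq_refl].
           apply ceq_cand; [apply ceq_refl|]. eapply ceq_trans; [|apply ceq_sym, peq_ceq; exact EU].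
           apply ceq_cand; auto using ceq_refl.
Qed.

Lemma canN_typ t n : canN t n -> exists G, tight_ctx G /\ typ G t TN 0 0 0 n.
Proof.
  induction 1.
  - exists (csingle x [TN]); split; [|constructor].
    intro y; unfold csingle; destruct (y =? x); repeat constructor.
  - destruct IHcanN as [G [TG T]]. exists G; split; auto. eapply ty_app_p'; eauto.
  - destruct IHcanN1 as [G [TG T]], IHcanN2 as [D [TD U]].
    exists (cand (cdrop (psize (PPair p1 p2)) G) (cand D cempty)); split.
    + apply tight_cand2; [intro; apply TG|apply tight_cand2; auto using tight_cempty].
    + eapply ty_match'; [exact T| apply pt_p; intros; apply TG| apply mtyp_single; exact U|
                         apply mteq_refl|lia..].
Qed.

Lemma canM_typ t n : canM t n -> exists G s, tight_ctx G /\ tight s /\ typ G t s 0 0 0 n.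
Proof.
  induction 1.
  - destruct IHcanM as [G [s [TG [Ts T]]]].
    exists (cdrop (psize p) G), TM; split; [intro; apply TG|]. split; [right; auto|].
    eapply ty_abs_p'; eauto.
  - exists cempty, TM; split; [apply tight_cempty|]. split; [right; auto|constructor].
  - destruct IHcanM as [G [s [TG [Ts T]]]]. destruct (canN_typ _ _ H0) as [D [TD U]].
    exists (cand (cdrop (psize (PPair p1 p2)) G) (cand D cempty)), s; split.
    + apply tight_cand2; [intro; apply TG|apply tight_cand2; auto using tight_cempty].
    + split; auto. eapply ty_match'; [exact T| apply pt_p; intros; apply TG| apply mtyp_single; exact U|
                         apply mteq_refl|lia..].
  - destruct (canN_typ _ _ H) as [G [TG T]]. exists G, TN; split; auto. split; [left; auto|auto].
Qed.

Definition irr t := forall k w, ~ hstep t k w.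
Definition is_pairL t := exists L a c, t = plug L (Pair a c).

Lemma irr_lam p t : irr (Lam p t) -> irr t.
Proof. intros H k w Hs. apply (H k (Lam p w)). simpl. eauto. Qed.

Lemma irr_app t u : irr (App t u) -> ~ is_abs t /\ irr t.
Proof.
  intros H. assert (NA : ~ is_abs t).
  { intros (L & p & t0 & ->). apply (H KB (plug L (Sub t0 p (lift (nbL L) 0 u)))). simpl.
    left; split; auto. exists L, p, t0; auto. }
  split; auto. intros k w Hs. apply (H k (App w u)); simpl. right; split; eauto.
Qed.

Lemma irr_sub t p u : irr (Sub t p u) ->
  irr t /\ exists p1 p2, p = PPair p1 p2 /\ ~ is_pairL u /\ irr u.
Proof.
  intros H. assert (It : irr t).
  { intros k w Hs. apply (H k (Sub w p u)). simpl. left; eauto. }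
  split; auto. destruct p as [|p1 p2].
  - exfalso. apply (H KE (subst 0 u t)); simpl. right; split; auto.
  - exists p1, p2; split; auto. split.
    + intros (L & a & c & ->). eapply (H KM); simpl. right; split; [exact It|].
      left; split; [reflexivity|]. exists L, a, c; split; reflexivity.
    + intros k w Hs. apply (H k (Sub t (PPair p1 p2) w)). simpl. right; split; auto.
      right; eauto.
Qed.

Lemma not_abs_sub t p u : ~ is_abs (Sub t p u) -> ~ is_abs t.
Proof. intros H (L & q & t0 & ->). apply H. exists (LSub L p u), q, t0; reflexivity. Qed.
Lemma not_pairL_sub t p u : ~ is_pairL (Sub t p u) -> ~ is_pairL t.
Proof. intros H (L & a & c & ->). apply H. exists (LSub L p u), a, c; reflexivity. Qed.

Lemma tight_not_prod A B : ~ tight (TProd A B).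
Proof. intros [H|H]; discriminate. Qed.
Lemma tight_not_arr A B : ~ tight (TArr A B).
Proof. intros [H|H]; discriminate. Qed.

Lemma tight_cdrop_inv n G : tight_ctx (cdrop n G) -> (forall i, i < n -> tight_m (G i)) -> tight_ctx G.
Proof.
  intros H1 H2 y. destruct (Nat.ltb_spec y n); auto.
  specialize (H1 (y - n)). unfold cdrop in H1. replace (y - n + n) with y in H1 by lia. auto.
Qed.

Lemma prog_aux t : irr t -> ~ is_abs t -> ~ is_pairL t -> forall G s b e m f,
  tight_ctx G -> typ G t s b e m f -> tight s /\ canN t f /\ b = 0 /\ e = 0 /\ m = 0.
Proof.
  induction t; intros I NA NP G s b e m f TG H.
  - inversion H; subst. specialize (TG n). unfold csingle in TG. rewrite Nat.eqb_refl in TG.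
    inversion TG; subst. repeat split; auto. constructor.
  - exfalso; apply NA. exists Hole, p, t; reflexivity.
  - exfalso; apply NP. exists Hole, t1, t2; reflexivity.
  - apply irr_app in I as [NA1 I1].
    assert (NP1 : ~ is_pairL t1).
    { intros (L & a & c & ->). inversion H; subst;
      match goal with H1 : typ _ (plug _ _) _ _ _ _ _ |- _ =>
        apply plug_pair_shape in H1 as [? | (? & ? & ?)]; discriminate end. }
    inversion H; subst.
    + apply tight_cand in TG as [TG1 _].
      match goal with H1 : typ _ t1 _ _ _ _ _ |- _ =>
        destruct (IHt1 I1 NA1 NP1 _ _ _ _ _ _ TG1 H1) as [Ts _] end.
      exfalso; eapply tight_not_arr; eauto.
    + match goal with H1 : typ _ t1 _ _ _ _ _ |- _ =>
        destruct (IHt1 I1 NA1 NP1 _ _ _ _ _ _ TG H1) as (Ts & C & -> & -> & ->) end.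
      repeat split; auto. constructor; auto.
  - apply irr_sub in I as [I1 (p1 & p2 & -> & NPu & Iu)].
    pose proof (not_abs_sub _ _ _ NA) as NA1. pose proof (not_pairL_sub _ _ _ NP) as NP1.
    inversion H; subst. apply tight_cand in TG as [TG1 TD].
    match goal with Hp : ptyp _ 0 (PPair p1 p2) _ _ _ _ |- _ => inversion Hp; subst end.
    + match goal with HQ : mteq [TProd _ _] _, HU : mtyp _ _ _ _ _ _ _ |- _ =>
        apply mteq_single_l in HQ as [sb [-> Sb]];
        apply teq_prod_inv in Sb as (B1 & B2 & -> & Q1 & Q2);
        apply mtyp_single_inv in HU as [Du [TU EU]] end.
      assert (NAu : ~ is_abs t2).
      { intros (L & q & t0 & ->). apply plug_lam_shape in TU as [? | (? & ? & ?)]; discriminate. }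
      assert (TDu : tight_ctx Du) by (intro y; specialize (TD y); rewrite EU in TD;
        unfold cand, tight_m in TD; apply Forall_app in TD; tauto).
      destruct (IHt2 Iu NAu NPu _ _ _ _ _ _ TDu TU) as [Ts _].
      exfalso; eapply tight_not_prod; eauto.
    + match goal with HQ : mteq [TN] _, HU : mtyp _ _ _ _ _ _ _ |- _ =>
        apply mteq_single_l in HQ as [sb [-> Sb]]; apply teq_TN in Sb; subst;
        apply mtyp_single_inv in HU as [Du [TU EU]] end.
      assert (NAu : ~ is_abs t2).
      { intros (L & q & t0 & ->). apply plug_lam_shape in TU as [? | (? & ? & ?)]; discriminate. }
      assert (TDu : tight_ctx Du) by (intro y; specialize (TD y); rewrite EU in TD;
        unfold cand, tight_m in TD; apply Forall_app in TD; tauto).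
      destruct (IHt2 Iu NAu NPu _ _ _ _ _ _ TDu TU) as (_ & Cu & -> & -> & ->).
      match goal with H1 : typ ?G0 t1 _ _ _ _ _, Hpt : forall i, _ -> tight_m (?G0 i) |- _ =>
        assert (TG0 : tight_ctx G0) by (apply (tight_cdrop_inv _ _ TG1); intros; apply Hpt; simpl in *; lia);
        destruct (IHt1 I1 NA1 NP1 _ _ _ _ _ _ TG0 H1) as (Ts & C1 & -> & -> & ->) end.
      repeat split; auto; try lia. constructor; auto.
Qed.

Lemma var_not_abs n : ~ is_abs (Var n).
Proof. intros (L & p & t & H); destruct L; discriminate. Qed.
Lemma var_not_pair n : ~ is_pairL (Var n).
Proof. intros (L & p & t & H); destruct L; discriminate. Qed.
Lemma app_not_abs a c : ~ is_abs (App a c).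
Proof. intros (L & p & t & H); destruct L; discriminate. Qed.
Lemma app_not_pair a c : ~ is_pairL (App a c).
Proof. intros (L & p & t & H); destruct L; discriminate. Qed.

Lemma prog_main t : irr t -> forall G s b e m f,
  tight_ctx G -> tight s -> typ G t s b e m f -> canM t f /\ b = 0 /\ e = 0 /\ m = 0.
Proof.
  induction t; intros I G s b e m f TG Ts H.
  - destruct (prog_aux _ I (var_not_abs n) (var_not_pair n) _ _ _ _ _ _ TG H) as (_ & C & ? & ? & ?).
    repeat split; auto. constructor; auto.
  - apply irr_lam in I. inversion H; subst.
    + exfalso; eapply tight_not_arr; eauto.
    + match goal with H1 : typ ?G0 t ?s0 _ _ _ _, Hs0 : tight ?s0, Hpt : forall i, _ -> tight_m (?G0 i) |- _ =>
        assert (TG0 : tight_ctx G0) by (apply (tight_cdrop_inv _ _ TG); auto);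
        destruct (IHt I _ _ _ _ _ _ TG0 Hs0 H1) as (C & -> & -> & ->) end.
      repeat split; auto. constructor; auto.
  - inversion H; subst.
    + exfalso; eapply tight_not_prod; eauto.
    + repeat split; auto. constructor.
  - destruct (prog_aux _ I (app_not_abs _ _) (app_not_pair _ _) _ _ _ _ _ _ TG H) as (_ & C & ? & ? & ?).
    repeat split; auto. constructor; auto.
  - apply irr_sub in I as [I1 (p1 & p2 & -> & NPu & Iu)].
    inversion H; subst. apply tight_cand in TG as [TG1 TD].
    match goal with Hp : ptyp _ 0 (PPair p1 p2) _ _ _ _ |- _ => inversion Hp; subst end.
    + match goal with HQ : mteq [TProd _ _] _, HU : mtyp _ _ _ _ _ _ _ |- _ =>
        apply mteq_single_l in HQ as [sb [-> Sb]];
        apply teq_prod_inv in Sb as (B1 & B2 & -> & Q1 & Q2);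
        apply mtyp_single_inv in HU as [Du [TU EU]] end.
      assert (NAu : ~ is_abs t2).
      { intros (L & q & t0 & ->). apply plug_lam_shape in TU as [? | (? & ? & ?)]; discriminate. }
      assert (TDu : tight_ctx Du) by (intro y; specialize (TD y); rewrite EU in TD;
        unfold cand, tight_m in TD; apply Forall_app in TD; tauto).
      destruct (prog_aux _ Iu NAu NPu _ _ _ _ _ _ TDu TU) as [Ts' _].
      exfalso; eapply tight_not_prod; eauto.
    + match goal with HQ : mteq [TN] _, HU : mtyp _ _ _ _ _ _ _ |- _ =>
        apply mteq_single_l in HQ as [sb [-> Sb]]; apply teq_TN in Sb; subst;
        apply mtyp_single_inv in HU as [Du [TU EU]] end.
      assert (NAu : ~ is_abs t2).
      { intros (L & q & t0 & ->). apply plug_lam_shape in TU as [? | (? & ? & ?)]; discriminate. }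
      assert (TDu : tight_ctx Du) by (intro y; specialize (TD y); rewrite EU in TD;
        unfold cand, tight_m in TD; apply Forall_app in TD; tauto).
      destruct (prog_aux _ Iu NAu NPu _ _ _ _ _ _ TDu TU) as (_ & Cu & -> & -> & ->).
      match goal with H1 : typ ?G0 t1 _ _ _ _ _, Hpt : forall i, _ -> tight_m (?G0 i) |- _ =>
        assert (TG0 : tight_ctx G0) by (apply (tight_cdrop_inv _ _ TG1); intros; apply Hpt; simpl in *; lia);
        destruct (IHt1 I1 _ _ _ _ _ _ TG0 Ts H1) as (C1 & -> & -> & ->) end.
      repeat split; auto; try lia. constructor; auto.
Qed.

Lemma sound_n n : forall t G s b e m f, b + e + m <= n ->
  tight_ctx G -> tight s -> typ G t s b e m f ->
  exists u, hreds t b e m u /\ canM u f.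
Proof.
  induction n; intros t G s b e m f Hn TG Ts H;
  (destruct (classic (exists k w, hstep t k w)) as [(k & w & Hs) | NS];
   [|assert (I : irr t) by (intros k w Hs; apply NS; eauto);
     destruct (prog_main _ I _ _ _ _ _ _ TG Ts H) as (C & -> & -> & ->);
     exists t; split; [constructor|auto]]).
  - destruct (SR _ _ _ Hs _ _ _ _ _ _ H) as (G' & s' & b' & e' & m' & T' & C' & S' & -> & -> & ->).
    destruct k; simpl in Hn; lia.
  - destruct (SR _ _ _ Hs _ _ _ _ _ _ H) as (G' & s' & b' & e' & m' & T' & C' & S' & -> & -> & ->).
    destruct (IHn w G' s' b' e' m' f) as (u & R & Cu).
    + destruct k; simpl in Hn; lia.
    + eapply ceq_tight; eauto.
    + eapply teq_tight; eauto.
    + auto.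
    + exists u; split; auto. econstructor; eauto.
Qed.

Lemma complete t b e m u s : hreds t b e m u -> canM u s ->
  exists G tau, tight_ctx G /\ tight tau /\ typ G t tau b e m s.
Proof.
  induction 1; intro C.
  - destruct (canM_typ _ _ C) as (G & s' & TG & Ts & T). eauto.
  - destruct (IHhreds C) as (G' & tau & TG & Ts & T).
    destruct (SE _ _ _ H _ _ _ _ _ _ T) as (G0 & s0 & T0 & C0 & S0).
    exists G0, s0; split; [eapply ceq_tight; [apply ceq_sym|]; eauto|].
    split; [eapply teq_tight; [apply teq_sym|]; eauto|auto].
Qed.

Theorem corollary1 (t : term) (b e m s : nat) :
  (exists (G : ctx) (tau : ty),
      tight_ctx G /\ tight tau /\ typ G t tau b e m s)
  <->
  (exists u : term, hreds t b e m u /\ canM u s).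
Proof.
  split.
  - intros (G & tau & TG & Ts & T). eapply sound_n; eauto.
  - intros (u & R & C). eapply complete; eauto.
Qed.
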